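(* Let $\gamma>0$, $W,V\in C_{p,\gamma}^{0}(\mathbb{R})$ (possibly complex-valued), $\mathscr{L}\psi:=-\psi''+W\psi'+V\psi$, and for $\lambda\in\mathbb{R}$ let $\mathcal{E}(\lambda):=\{\psi\in C_{p}^{2}(\mathbb{R}) : \mathscr{L}\psi=\lambda\psi\}$. Then: - if $\lambda\in\sigma_{g}^{1}(\mathscr{L})$, then $\mathcal{E}(\lambda)=\{e^{\mathrm{i}k_{0}x}p(x) : \mathcal{D}^{k_{0}}p=\lambda p,\ p\in C_{p,\gamma}^{2}(\mathbb{R})\}$, where $\mathcal{A}(\lambda)=\{[k_{0}]_{\gamma}\}$; - if $\lambda\in\sigma_{g}^{2}(\mathscr{L})$, then $\mathcal{E}(\lambda)=\{e^{\mathrm{i}k_{0}x}(p_{1}(x)+xp_{2}(x)) : \mathcal{D}^{k_{0}}p_{2}=\lambda p_{2},\ \mathcal{D}^{k_{0}}p_{1}=\lambda p_{1}+(2\mathrm{i}k_{0}-W)p_{2}+2p_{2}',\ p_{1},p_{2}\in C_{p,\gamma}^{2}(\mathbb{R})\}$; - if $\lambda\in\sigma_{g}^{3}(\mathscr{L})$, then $\mathcal{E}(\lambda)=\operatorname{span}\{e^{\mathrm{i}kx}p(x) : \mathcal{D}^{k}p=\lambda p,\ [k]_{\gamma}\in\mathcal{A}(\lambda),\ |\mathcal{A}(\lambda)|=2,\ p\in C_{p,\gamma}^{2}(\mathbb{R})\}$.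
   Context: $C_{p}^{0}(I)$: integrable piecewise-continuous functions on $I$ (finitely many discontinuities on each finite subinterval, one-sided improper integrals of $|f|$ converging at each discontinuity); $C_{p}^{l}(I)$: differentiable functions with derivative in $C_{p}^{l-1}(I)$; $C_{p,\gamma}^{l}(\mathbb{R})$: $\gamma$-periodic functions in $C_{p}^{l}(\mathbb{R})$; $[k]_{\gamma}=\{k+2m\pi/\gamma:m\in\mathbb{Z}\}$ for $k\in\mathbb{C}$. Every solution in $C_p^2(\mathbb{R})$ of $\mathscr{L}\psi=\lambda\psi$ has one of the forms (a) $e^{\mathrm{i}k_0x}p(x)$, (b) $e^{\mathrm{i}k_0x}(p_1(x)+xp_2(x))$ with $p_2\not\equiv0$, (c) $e^{\mathrm{i}k_1x}p_1(x)+e^{\mathrm{i}k_2x}p_2(x)$ with $[k_1]_\gamma\ne[k_2]_\gamma$, where $k_0,k_1,k_2\in\mathbb{C}$ and $p,p_1,p_2\in C^2_{p,\gamma}(\mathbb{R})$; the exponents $k$ are called quasimomenta, and $\mathcal{A}(\lambda)$ is the set of congruence classes modulo $2\pi/\gamma$ of quasimomenta of solutions corresponding to $\lambda$ (it has at most two elements; in cases (a),(b) $\mathcal{A}(\lambda)=\{[k_0]_\gamma\}$, in case (c) $\mathcal{A}(\lambda)=\{[k_1]_\gamma,[k_2]_\gamma\}$). $\sigma_{g}^{1}(\mathscr{L})$, $\sigma_{g}^{2}(\mathscr{L})$, $\sigma_{g}^{3}(\mathscr{L})$ are the sets of $\lambda\in\mathbb{R}$ for which $\mathscr{L}\psi=\lambda\psi$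 has a solution $\psi$ of form (a) with $|\mathcal{A}(\lambda)|=1$, of form (b) with $|\mathcal{A}(\lambda)|=1$, and of form (c) with $|\mathcal{A}(\lambda)|=2$, respectively. For $k\in\mathbb{C}$, $\mathcal{D}^{k}:=-\frac{d^{2}}{dx^{2}}+(W-2\mathrm{i}k)\frac{d}{dx}+\mathrm{i}kW+V+k^{2}$. *)

(* Defs.v *)
From Stdlib Require Import Reals ZArith List.
From Coquelicot Require Import Coquelicot.
Open Scope R_scope.

Definition cexp (z : C) : C :=
  (exp (Re z) * cos (Im z), exp (Re z) * sin (Im z)).

Definition cdiff (f : R -> C) : Prop :=
  forall x, ex_derive (fun t => fst (f t)) x /\ ex_derive (fun t => snd (f t)) x.
Definition cD (f : R -> C) : R -> C :=
  fun x => (Derive (fun t => fst (f t)) x, Derive (fun t => snd (f t)) x).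

(** C_p^0(R): integrable piecewise-continuous functions: finitely many
    discontinuities on each finite subinterval, and at each discontinuity the
    one-sided improper integrals of |f| converge. *)
Definition PC0 (f : R -> C) : Prop :=
  (forall a b : R, exists s : list R,
      forall x, a <= x <= b -> ~ continuous f x -> In x s) /\
  (forall x, ~ continuous f x -> exists d, 0 < d /\
      ex_RInt_gen (fun t => Cmod (f t)) (at_right x) (at_point (x + d)) /\
      ex_RInt_gen (fun t => Cmod (f t)) (at_point (x - d)) (at_left x)).

Fixpoint Cp (l : nat) (f : R -> C) : Prop :=
  match l with
  | O => PC0 f
  | S l' => cdiff f /\ Cp l' (cD f)
  end.

Definition Cpg (l : nat) (gamma : R) (f : R -> C) : Prop :=
  Cp l f /\ forall x, f (x + gamma) = f x.

Definition congr (gamma : R) (k k' : C) : Prop :=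
  exists m : Z, k' = Cplus k (RtoC (2 * IZR m * PI / gamma)).

Open Scope C_scope.

Definition Lop (W V : R -> C) (psi : R -> C) : R -> C :=
  fun x => - cD (cD psi) x + W x * cD psi x + V x * psi x.

Definition Dk (W V : R -> C) (k : C) (p : R -> C) : R -> C :=
  fun x => - cD (cD p) x + (W x - 2 * Ci * k) * cD p x
           + (Ci * k * W x + V x + k * k) * p x.

Definition Eset (W V : R -> C) (lam : R) (psi : R -> C) : Prop :=
  Cp 2 psi /\ forall x, Lop W V psi x = RtoC lam * psi x.

Definition ebl (k : C) (x : R) : C := cexp (Ci * k * RtoC x).

Definition formA (gamma : R) (psi : R -> C) (k0 : C) : Prop :=
  exists p, Cpg 2 gamma p /\ forall x, psi x = ebl k0 x * p x.
Definition formB (gamma : R) (psi : R -> C) (k0 : C) : Prop :=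
  exists p1 p2, Cpg 2 gamma p1 /\ Cpg 2 gamma p2 /\ (exists x, p2 x <> 0) /\
    forall x, psi x = ebl k0 x * (p1 x + RtoC x * p2 x).
Definition formC (gamma : R) (psi : R -> C) (k1 k2 : C) : Prop :=
  ~ congr gamma k1 k2 /\
  exists p1 p2, Cpg 2 gamma p1 /\ Cpg 2 gamma p2 /\
    forall x, psi x = ebl k1 x * p1 x + ebl k2 x * p2 x.

(** k is a quasimomentum of some (nonzero) solution for lambda, i.e.
    [k]_gamma is an element of A(lambda). *)
Definition inA (gamma : R) (W V : R -> C) (lam : R) (k : C) : Prop :=
  exists psi, Eset W V lam psi /\ (exists x, psi x <> 0) /\
   ( formA gamma psi k \/ formB gamma psi k \/
     (exists k' p1 p2, ~ congr gamma k k' /\ Cpg 2 gamma p1 /\ Cpg 2 gamma p2 /\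
        (exists x, p1 x <> 0) /\ (exists x, p2 x <> 0) /\
        forall x, psi x = ebl k x * p1 x + ebl k' x * p2 x) ).

Definition cardA1 gamma W V lam : Prop :=
  exists k, inA gamma W V lam k /\ forall k', inA gamma W V lam k' -> congr gamma k k'.
Definition cardA2 gamma W V lam : Prop :=
  exists k1 k2, inA gamma W V lam k1 /\ inA gamma W V lam k2 /\ ~ congr gamma k1 k2 /\
    forall k, inA gamma W V lam k -> congr gamma k1 k \/ congr gamma k2 k.

Definition sigma2 gamma W V lam : Prop :=
  (exists psi k0, Eset W V lam psi /\ formB gamma psi k0) /\ cardA1 gamma W V lam.
Definition sigma1 gamma W V lam : Prop :=
  (exists psi k0, Eset W V lam psi /\ (exists x, psi x <> 0) /\ formA gamma psi k0) /\
  cardA1 gamma W V lam /\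
  (* READING: no solution of the (Jordan) form (b) *)
  ~ (exists psi k0, Eset W V lam psi /\ formB gamma psi k0).
Definition sigma3 gamma W V lam : Prop :=
  (exists psi k1 k2, Eset W V lam psi /\ formC gamma psi k1 k2) /\ cardA2 gamma W V lam.

Fixpoint lincomb (l : list (C * (R -> C))) : R -> C :=
  match l with
  | nil => fun _ => 0
  | (c, f) :: l' => fun x => c * f x + lincomb l' x
  end.
Definition cspan (S : (R -> C) -> Prop) (psi : R -> C) : Prop :=
  exists l, List.Forall (fun cf : C * (R -> C) => S (snd cf)) l /\ forall x, psi x = lincomb l x.

(* Main.v *)
Require Import Defs.
From Stdlib Require Import Reals ZArith List Lra Lia FunctionalExtensionality Classical.
From Coquelicot Require Import Coquelicot.
Open Scope R_scope.

Lemma isd_val (f : R -> R) (x d d' : R) : is_derive f x d -> d = d' -> is_derive f x d'.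
Proof. intros H ->; exact H. Qed.

Lemma isd_plus (f g : R -> R) x df dg :
  is_derive f x df -> is_derive g x dg -> is_derive (fun t => f t + g t) x (df + dg).
Proof. intros; apply (is_derive_plus f g x df dg); auto. Qed.

Lemma isd_minus (f g : R -> R) x df dg :
  is_derive f x df -> is_derive g x dg -> is_derive (fun t => f t - g t) x (df - dg).
Proof. intros; apply (is_derive_minus f g x df dg); auto. Qed.

Lemma isd_mult (f g : R -> R) x df dg :
  is_derive f x df -> is_derive g x dg -> is_derive (fun t => f t * g t) x (df * g x + f x * dg).
Proof. intros H1 H2. apply (is_derive_mult f g x df dg H1 H2). intros; apply Rmult_comm. Qed.

Lemma isd_const (a : R) x : is_derive (fun _ => a) x 0.
Proof. apply (is_derive_const a x). Qed.

Lemma isd_id x : is_derive (fun t : R => t) x 1.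
Proof. apply (is_derive_id x). Qed.

Lemma isd_ext (f g : R -> R) x d : (forall t, f t = g t) -> is_derive f x d -> is_derive g x d.
Proof. intros; eapply is_derive_ext; eauto. Qed.

Definition cderiv (f f' : R -> C) : Prop :=
  forall x, is_derive (fun t => fst (f t)) x (fst (f' x)) /\
            is_derive (fun t => snd (f t)) x (snd (f' x)).

Lemma cderiv_cD f f' : cderiv f f' -> cD f = f'.
Proof.
  intros H; apply functional_extensionality; intro x; unfold cD.
  destruct (H x) as [H1 H2].
  apply injective_projections; simpl; apply is_derive_unique; auto.
Qed.

Lemma cderiv_cD_pt f f' x : cderiv f f' -> cD f x = f' x.
Proof. intros H; rewrite (cderiv_cD _ _ H); reflexivity. Qed.

Lemma cderiv_cdiff f f' : cderiv f f' -> cdiff f.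
Proof. intros H x; destruct (H x); split; eexists; eauto. Qed.

Lemma cdiff_cderiv f : cdiff f -> cderiv f (cD f).
Proof. intros H x; destruct (H x); split; simpl; apply Derive_correct; auto. Qed.

Lemma cderiv_ext f g f' : (forall t, f t = g t) -> cderiv f f' -> cderiv g f'.
Proof.
  intros E H x; destruct (H x) as [A1 A2]; split.
  - apply (isd_ext (fun t => fst (f t))); auto. intros t; rewrite E; reflexivity.
  - apply (isd_ext (fun t => snd (f t))); auto. intros t; rewrite E; reflexivity.
Qed.

Lemma cderiv_ext' f f' g' : (forall t, f' t = g' t) -> cderiv f f' -> cderiv f g'.
Proof. intros E H x; rewrite <- E; auto. Qed.

Lemma cderiv_plus f g f' g' : cderiv f f' -> cderiv g g' ->
  cderiv (fun x => (f x + g x)%C) (fun x => (f' x + g' x)%C).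
Proof.
  intros Hf Hg x; destruct (Hf x) as [A1 A2]; destruct (Hg x) as [B1 B2]; simpl;
  split; apply (isd_plus _ _ _ _ _ A1 B1) || apply (isd_plus _ _ _ _ _ A2 B2).
Qed.

Lemma cderiv_opp f f' : cderiv f f' -> cderiv (fun x => (- f x)%C) (fun x => (- f' x)%C).
Proof.
  intros Hf x; destruct (Hf x) as [A1 A2]; simpl; split.
  - apply (is_derive_opp (fun t => fst (f t)) x _ A1).
  - apply (is_derive_opp (fun t => snd (f t)) x _ A2).
Qed.

Lemma cderiv_minus f g f' g' : cderiv f f' -> cderiv g g' ->
  cderiv (fun x => (f x - g x)%C) (fun x => (f' x - g' x)%C).
Proof. intros; unfold Cminus; apply cderiv_plus; auto; apply cderiv_opp; auto. Qed.

Lemma cderiv_mult f g f' g' : cderiv f f' -> cderiv g g' ->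
  cderiv (fun x => (f x * g x)%C) (fun x => (f' x * g x + f x * g' x)%C).
Proof.
  intros Hf Hg x; destruct (Hf x) as [A1 A2]; destruct (Hg x) as [B1 B2]; simpl; split.
  - refine (isd_val _ _ _ _ (isd_minus _ _ _ _ _ (isd_mult _ _ _ _ _ A1 B1) (isd_mult _ _ _ _ _ A2 B2)) _).
    ring.
  - refine (isd_val _ _ _ _ (isd_plus _ _ _ _ _ (isd_mult _ _ _ _ _ A1 B2) (isd_mult _ _ _ _ _ A2 B1)) _).
    ring.
Qed.

Lemma cderiv_const (c : C) : cderiv (fun _ => c) (fun _ => 0%C).
Proof. intros x; simpl; split; apply isd_const. Qed.

Lemma cderiv_id : cderiv (fun x => RtoC x) (fun _ => 1%C).
Proof. intros x; simpl; split; [apply isd_id | apply isd_const]. Qed.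

Lemma cderiv_scal (c : C) f f' : cderiv f f' ->
  cderiv (fun x => (c * f x)%C) (fun x => (c * f' x)%C).
Proof.
  intros H. eapply cderiv_ext'. 2: apply cderiv_mult; [apply cderiv_const | exact H].
  intros t; simpl. ring.
Qed.

Lemma ebl_expl k x : ebl k x = (exp (- snd k * x) * cos (fst k * x), exp (- snd k * x) * sin (fst k * x)).
Proof.
  unfold ebl, cexp; destruct k as [a b]; simpl.
  replace ((0 * a - 1 * b) * x - (0 * b + 1 * a) * 0) with (- b * x) by ring.
  replace ((0 * a - 1 * b) * 0 + (0 * b + 1 * a) * x) with (a * x) by ring.
  reflexivity.
Qed.

Lemma cderiv_ebl k : cderiv (ebl k) (fun x => (Ci * k * ebl k x)%C).
Proof.
  intros x; destruct k as [a b].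
  split; (eapply isd_ext; [intros t; rewrite ebl_expl; reflexivity|]);
  rewrite ebl_expl; simpl; auto_derive; auto; ring.
Qed.

Lemma cderiv_shift f f' (g : R) : cderiv f f' -> cderiv (fun x => f (x + g)) (fun x => f' (x + g)).
Proof.
  intros H x; destruct (H (x + g)) as [A1 A2]; split.
  - refine (isd_val _ _ _ _ (is_derive_comp (fun t => fst (f t)) (fun t => t + g) _ _ _ A1 (isd_plus _ _ _ _ _ (isd_id x) (isd_const g x))) _).
    simpl. unfold scal; simpl; unfold mult; simpl. ring.
  - refine (isd_val _ _ _ _ (is_derive_comp (fun t => snd (f t)) (fun t => t + g) _ _ _ A2 (isd_plus _ _ _ _ _ (isd_id x) (isd_const g x))) _).
    simpl. unfold scal; simpl; unfold mult; simpl. ring.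
Qed.

Lemma cD_shift f (g : R) x : cD (fun t => f (t + g)) x = cD f (x + g).
Proof.
  unfold cD, Derive; f_equal; f_equal; apply Lim_ext; intros y;
  replace (x + y + g) with (x + g + y) by ring; reflexivity.
Qed.

Lemma cD_shift_fun f (g : R) : cD (fun t => f (t + g)) = (fun x => cD f (x + g)).
Proof. apply functional_extensionality; intros; apply cD_shift. Qed.

Lemma cos_periodZ x (m : Z) : cos (x + 2 * IZR m * PI) = cos x.
Proof.
  destruct (Z_le_gt_dec 0 m) as [H|H].
  - rewrite <- (Z2Nat.id m) by lia. rewrite <- INR_IZR_INZ. apply cos_period.
  - assert (E : x = (x + 2 * IZR m * PI) + 2 * INR (Z.to_nat (- m)) * PI).
    { rewrite INR_IZR_INZ, Z2Nat.id by lia. rewrite opp_IZR. ring. }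
    rewrite E at 2. rewrite cos_period. reflexivity.
Qed.

Lemma sin_periodZ x (m : Z) : sin (x + 2 * IZR m * PI) = sin x.
Proof.
  destruct (Z_le_gt_dec 0 m) as [H|H].
  - rewrite <- (Z2Nat.id m) by lia. rewrite <- INR_IZR_INZ. apply sin_period.
  - assert (E : x = (x + 2 * IZR m * PI) + 2 * INR (Z.to_nat (- m)) * PI).
    { rewrite INR_IZR_INZ, Z2Nat.id by lia. rewrite opp_IZR. ring. }
    rewrite E at 2. rewrite sin_period. reflexivity.
Qed.

Lemma cexp_add a b : cexp (a + b)%C = (cexp a * cexp b)%C.
Proof.
  destruct a as [a1 a2]; destruct b as [b1 b2]; unfold cexp; simpl.
  rewrite exp_plus, cos_plus, sin_plus. apply injective_projections; simpl; ring.
Qed.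

Lemma ebl_add k x y : ebl k (x + y) = (ebl k x * ebl k y)%C.
Proof.
  unfold ebl. rewrite <- cexp_add. f_equal. rewrite RtoC_plus. ring.
Qed.

Lemma ebl_nz k x : ebl k x <> 0%C.
Proof.
  rewrite ebl_expl. intros H. injection H as H1 H2.
  pose proof (exp_pos (- snd k * x)).
  apply (cos_sin_0 (fst k * x)). split.
  - apply Rmult_integral in H1; destruct H1; [lra|auto].
  - apply Rmult_integral in H2; destruct H2; [lra|auto].
Qed.

Lemma ebl_opp k x : (ebl (- k) x * ebl k x)%C = 1%C.
Proof.
  unfold ebl. rewrite <- cexp_add.
  replace (Ci * - k * RtoC x + Ci * k * RtoC x)%C with (RtoC 0) by ring.
  unfold cexp; simpl. rewrite exp_0, cos_0, sin_0. apply injective_projections; simpl; ring.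
Qed.

Lemma ebl_0 x : ebl 0 x = 1%C.
Proof.
  unfold ebl, cexp; simpl. apply injective_projections; simpl.
  - replace ((0 * 0 - 1 * 0) * x - (0 * 0 + 1 * 0) * 0) with 0 by ring. rewrite exp_0.
    replace ((0 * 0 - 1 * 0) * 0 + (0 * 0 + 1 * 0) * x) with 0 by ring. rewrite cos_0; ring.
  - replace ((0 * 0 - 1 * 0) * x - (0 * 0 + 1 * 0) * 0) with 0 by ring. rewrite exp_0.
    replace ((0 * 0 - 1 * 0) * 0 + (0 * 0 + 1 * 0) * x) with 0 by ring. rewrite sin_0; ring.
Qed.

Lemma ebl_plusk k k' x : ebl (k + k')%C x = (ebl k x * ebl k' x)%C.
Proof. unfold ebl. rewrite <- cexp_add. f_equal. ring. Qed.

Definition mult_ (gamma : R) (k : C) : C := ebl k gamma.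

Lemma ebl_period k g x : ebl k (x + g) = (mult_ g k * ebl k x)%C.
Proof. unfold mult_. rewrite ebl_add. ring. Qed.

Lemma ebl_int_period (gamma : R) (m : Z) x : gamma <> 0 ->
  ebl (RtoC (2 * IZR m * PI / gamma)) (x + gamma) = ebl (RtoC (2 * IZR m * PI / gamma)) x.
Proof.
  intros Hg. rewrite !ebl_expl. simpl.
  replace (- 0 * (x + gamma)) with (- 0 * x) by ring.
  replace (2 * IZR m * PI / gamma * (x + gamma)) with (2 * IZR m * PI / gamma * x + 2 * IZR m * PI) by (field; auto).
  rewrite cos_periodZ, sin_periodZ. reflexivity.
Qed.

Lemma congr_mult gamma k k' : gamma <> 0 -> congr gamma k k' -> mult_ gamma k = mult_ gamma k'.
Proof.
  intros Hg [m ->]. unfold mult_. rewrite ebl_plusk.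
  rewrite (ebl_expl (RtoC _)). simpl.
  replace (- 0 * gamma) with 0 by ring. rewrite exp_0.
  replace (2 * IZR m * PI / gamma * gamma) with (0 + 2 * IZR m * PI) by (field; auto).
  rewrite cos_periodZ, sin_periodZ, cos_0, sin_0.
  destruct (ebl k gamma) as [p q]. apply injective_projections; simpl; ring.
Qed.

Lemma congr_refl gamma k : congr gamma k k.
Proof. exists 0%Z. replace (2 * IZR 0 * PI / gamma) with 0 by (simpl; unfold Rdiv; ring). ring. Qed.

Lemma congr_sym gamma k k' : congr gamma k k' -> congr gamma k' k.
Proof.
  intros [m ->]. exists (- m)%Z. rewrite opp_IZR.
  rewrite <- Cplus_assoc, <- RtoC_plus.
  replace (2 * IZR m * PI / gamma + 2 * - IZR m * PI / gamma) with 0 by (unfold Rdiv; ring). ring.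
Qed.

Lemma congr_trans gamma k1 k2 k3 : congr gamma k1 k2 -> congr gamma k2 k3 -> congr gamma k1 k3.
Proof.
  intros [m ->] [n ->]. exists (m + n)%Z. rewrite plus_IZR.
  rewrite <- Cplus_assoc, <- RtoC_plus. f_equal. f_equal. unfold Rdiv; ring.
Qed.

Lemma mult_congr gamma k k' : 0 < gamma -> mult_ gamma k = mult_ gamma k' -> congr gamma k k'.
Proof.
  intros Hg E. unfold mult_ in E. rewrite !ebl_expl in E.
  destruct k as [a b]; destruct k' as [a' b']; simpl in E.
  injection E as E1 E2.
  set (A := exp (- b * gamma)) in *. set (A' := exp (- b' * gamma)) in *.
  assert (HA : 0 < A) by apply exp_pos. assert (HA' : 0 < A') by apply exp_pos.
  assert (Q : A * A = A' * A').
  { pose proof (sin2_cos2 (a * gamma)) as S1. pose proof (sin2_cos2 (a' * gamma)) as S2.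
    unfold Rsqr in *.
    transitivity (A * A * (sin (a*gamma) * sin (a*gamma) + cos (a*gamma) * cos (a*gamma))). rewrite S1; ring.
    transitivity (A' * A' * (sin (a'*gamma) * sin (a'*gamma) + cos (a'*gamma) * cos (a'*gamma))).
    2: rewrite S2; ring.
    replace (A * A * (sin (a * gamma) * sin (a * gamma) + cos (a * gamma) * cos (a * gamma)))
      with ((A * sin (a*gamma)) * (A * sin (a*gamma)) + (A * cos (a*gamma)) * (A * cos (a*gamma))) by ring.
    rewrite E1, E2. ring. }
  assert (EA : A = A') by nra.
  assert (Eb : b = b').
  { unfold A, A' in EA. apply exp_inv in EA. apply Rmult_eq_reg_r with gamma; lra. }
  rewrite <- EA in E1, E2.
  assert (C1 : cos (a * gamma) = cos (a' * gamma)) by (apply Rmult_eq_reg_l with A; lra).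
  assert (S1 : sin (a * gamma) = sin (a' * gamma)) by (apply Rmult_eq_reg_l with A; lra).
  set (th := (a - a') * gamma).
  assert (Sth : sin th = 0).
  { unfold th. replace ((a - a') * gamma) with (a * gamma - a' * gamma) by ring.
    rewrite sin_minus, C1, S1. ring. }
  assert (Cth : cos th = 1).
  { unfold th. replace ((a - a') * gamma) with (a * gamma - a' * gamma) by ring.
    rewrite cos_minus, C1, S1. pose proof (sin2_cos2 (a' * gamma)). unfold Rsqr in *. lra. }
  destruct (sin_eq_0_0 th Sth) as [z Hz].
  destruct (Zeven_odd_dec z) as [Ev|Od].
  - apply Zeven_ex in Ev. destruct Ev as [j ->].
    exists (- j)%Z. rewrite opp_IZR. rewrite mult_IZR in Hz.
    unfold RtoC. apply injective_projections; simpl.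
    + apply Rmult_eq_reg_r with gamma; [|lra]. unfold th in Hz.
      field_simplify; [|lra]. lra.
    + lra.
  - exfalso. apply Zodd_ex in Od. destruct Od as [j ->].
    rewrite Hz in Cth. rewrite plus_IZR, mult_IZR in Cth.
    replace ((2 * IZR j + 1) * PI) with (PI + 2 * IZR j * PI) in Cth by ring.
    rewrite cos_periodZ, cos_PI in Cth. lra.
Qed.

Lemma mult_log gamma (c : C) : 0 < gamma -> c <> 0%C -> exists k, mult_ gamma k = c.
Proof.
  intros Hg Hc. destruct c as [u v].
  set (r := sqrt (u * u + v * v)).
  assert (Hr : 0 < r).
  { unfold r. apply sqrt_lt_R0. destruct (Req_dec u 0); destruct (Req_dec v 0).
    - subst; exfalso; apply Hc; reflexivity.
    - nra. - nra. - nra. }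
  assert (Hr2 : r * r = u * u + v * v) by (unfold r; apply sqrt_sqrt; nra).
  assert (Hu : -1 <= u / r <= 1).
  { split.
    - apply Rmult_le_reg_r with r; auto. field_simplify; try lra. nra.
    - apply Rmult_le_reg_r with r; auto. field_simplify; try lra. nra. }
  set (th := if Rle_dec 0 v then acos (u / r) else - acos (u / r)).
  assert (Cth : cos th = u / r).
  { unfold th; destruct (Rle_dec 0 v); [|rewrite cos_neg]; apply cos_acos; auto. }
  assert (Sth : sin th = v / r).
  { unfold th; destruct (Rle_dec 0 v).
    - rewrite sin_acos by auto.
      assert (E : 1 - (u / r)² = (v / r) * (v / r)) by (unfold Rsqr; field_simplify_eq; [nra|lra]).
      rewrite E. apply sqrt_square. apply Rdiv_le_0_compat; lra.
    - rewrite sin_neg, sin_acos by auto.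
      assert (E : 1 - (u / r)² = (- (v / r)) * (- (v / r))) by (unfold Rsqr; field_simplify_eq; [nra|lra]).
      rewrite E. rewrite sqrt_square. ring. assert (v / r < 0). apply Rdiv_neg_pos; lra. lra. }
  exists (th / gamma, - ln r / gamma).
  unfold mult_. rewrite ebl_expl. simpl.
  replace (- (- ln r / gamma) * gamma) with (ln r) by (field; lra).
  replace (th / gamma * gamma) with th by (field; lra).
  rewrite exp_ln by auto. rewrite Cth, Sth.
  apply injective_projections; simpl; field; lra.
Qed.

Lemma ball_R (x y e : R) : ball x e y <-> Rabs (y - x) < e.
Proof. split; intro H; exact H. Qed.

Lemma locally_R (x : R) (P : R -> Prop) : locally x P <-> exists e : posreal, forall y, Rabs (y - x) < e -> P y.
Proof. split; intros [e He]; exists e; intros y Hy; apply He; exact Hy. Qed.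

Lemma ccont_iff (f : R -> C) x :
  continuous f x <-> (continuous (fun t => fst (f t)) x /\ continuous (fun t => snd (f t)) x).
Proof.
  split.
  - intros H. split.
    + apply (continuous_comp f fst). exact H. destruct (f x); apply continuous_fst.
    + apply (continuous_comp f snd). exact H. destruct (f x); apply continuous_snd.
  - intros [H1 H2]. apply filterlim_locally. intros eps.
    apply filterlim_locally with (eps := eps) in H1.
    apply filterlim_locally with (eps := eps) in H2.
    generalize (filter_and _ _ H1 H2). apply filter_imp. intros t [A B]. split; assumption.
Qed.

Lemma rcont_plus (f g : R -> R) x : continuous f x -> continuous g x -> continuous (fun t => f t + g t) x.
Proof. intros; apply (continuous_plus f g); auto. Qed.
Lemma rcont_mult (f g : R -> R) x : continuous f x -> continuous g x -> continuous (fun t => f t * g t) x.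
Proof. intros; apply (continuous_mult f g); auto. Qed.
Lemma rcont_opp (f : R -> R) x : continuous f x -> continuous (fun t => - f t) x.
Proof. intros; apply (continuous_opp f); auto. Qed.
Lemma rcont_const (c : R) (x : R) : continuous (fun _ : R => c) x.
Proof. apply continuous_const. Qed.

Lemma ccont_plus (f g : R -> C) x : continuous f x -> continuous g x -> continuous (fun t => (f t + g t)%C) x.
Proof.
  rewrite !ccont_iff; intros [A1 A2] [B1 B2]; split; simpl; apply rcont_plus; auto.
Qed.
Lemma ccont_mult (f g : R -> C) x : continuous f x -> continuous g x -> continuous (fun t => (f t * g t)%C) x.
Proof.
  rewrite !ccont_iff; intros [A1 A2] [B1 B2]; split; simpl.
  - apply rcont_plus; [apply rcont_mult; auto | apply rcont_opp, rcont_mult; auto].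
  - apply rcont_plus; apply rcont_mult; auto.
Qed.
Lemma ccont_const (c : C) (x : R) : continuous (fun _ : R => c) x.
Proof. rewrite ccont_iff; split; apply rcont_const. Qed.

Lemma ccont_Cmod (f : R -> C) x : continuous f x -> continuous (fun t => Cmod (f t)) x.
Proof.
  rewrite ccont_iff; intros [A B]. unfold Cmod. apply continuous_sqrt_comp.
  simpl. apply rcont_plus; apply rcont_mult; auto; apply rcont_mult; auto; apply rcont_const.
Qed.

Lemma cderiv_cont f f' x : cderiv f f' -> continuous f x.
Proof.
  intros H. destruct (H x) as [A B]. apply ccont_iff; split.
  - apply (ex_derive_continuous (fun t => fst (f t))). eexists; eauto.
  - apply (ex_derive_continuous (fun t => snd (f t))). eexists; eauto.
Qed.

Lemma cdiff_cont f x : cdiff f -> continuous f x.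
Proof. intros H; apply (cderiv_cont f (cD f)); apply cdiff_cderiv; auto. Qed.

Lemma ex_RInt_cont (h : R -> R) a b : a <= b -> (forall t, a <= t <= b -> continuous h t) -> ex_RInt h a b.
Proof.
  intros Hab H. apply (@ex_RInt_continuous R_CompleteNormedModule h a b). intros z Hz. apply H.
  rewrite Rmin_left, Rmax_right in Hz; auto.
Qed.

Lemma RInt_le_cst (h : R -> R) a b M : a <= b -> ex_RInt h a b -> (forall t, a < t < b -> h t <= M) ->
  RInt h a b <= M * (b - a).
Proof.
  intros Hab Hi Hb. eapply Rle_trans.
  apply (RInt_le h (fun _ => M)); auto. apply ex_RInt_const.
  rewrite RInt_const. unfold scal; simpl; unfold mult; simpl. lra.
Qed.

Definition SR (h : R -> R) (x : R) : Prop :=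
  forall eps, 0 < eps -> exists del, 0 < del /\ forall s t, x < s -> s <= t -> t < x + del -> RInt h s t <= eps.
Definition SL (h : R -> R) (x : R) : Prop :=
  forall eps, 0 < eps -> exists del, 0 < del /\ forall s t, x - del < s -> s <= t -> t < x -> RInt h s t <= eps.
Definition contR (h : R -> R) x d := forall t, x < t <= x + d -> continuous h t.
Definition contL (h : R -> R) x d := forall t, x - d <= t < x -> continuous h t.

Lemma cont_SR h x d : 0 < d -> continuous h x -> contR h x d -> SR h x.
Proof.
  intros Hd Hc HR eps Heps.
  apply filterlim_locally with (eps := mkposreal 1 Rlt_0_1) in Hc.
  apply locally_R in Hc. destruct Hc as [d1 Hd1].
  set (M := Rabs (h x) + 1).
  assert (HM : 0 < M) by (unfold M; pose proof (Rabs_pos (h x)); lra).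
  exists (Rmin (Rmin d1 d) (eps / M)). split.
  { apply Rmin_pos; [apply Rmin_pos; [apply cond_pos|lra] | apply Rdiv_lt_0_compat; lra]. }
  intros s t Hs Hst Ht.
  assert (Hm1 := Rmin_l (Rmin d1 d) (eps / M)). assert (Hm2 := Rmin_r (Rmin d1 d) (eps / M)).
  assert (Hm3 := Rmin_l d1 d). assert (Hm4 := Rmin_r d1 d).
  eapply Rle_trans. apply (RInt_le_cst h s t M); auto.
  - apply ex_RInt_cont; auto. intros u Hu. apply HR. lra.
  - intros u Hu. assert (Rabs (u - x) < d1) by (rewrite Rabs_right; lra).
    specialize (Hd1 u H). change (Rabs (h u - h x) < 1) in Hd1.
    unfold M. pose proof (Rabs_triang_inv (h u) (h x)). pose proof (Rle_abs (h u)). lra.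
  - assert (t - s <= eps / M) by lra.
    apply Rmult_le_compat_l with (r := M) in H; [|lra].
    replace (M * (eps / M)) with eps in H by (field; lra). lra.
Qed.

Lemma cont_SL h x d : 0 < d -> continuous h x -> contL h x d -> SL h x.
Proof.
  intros Hd Hc HL eps Heps.
  apply filterlim_locally with (eps := mkposreal 1 Rlt_0_1) in Hc.
  apply locally_R in Hc. destruct Hc as [d1 Hd1].
  set (M := Rabs (h x) + 1).
  assert (HM : 0 < M) by (unfold M; pose proof (Rabs_pos (h x)); lra).
  exists (Rmin (Rmin d1 d) (eps / M)). split.
  { apply Rmin_pos; [apply Rmin_pos; [apply cond_pos|lra] | apply Rdiv_lt_0_compat; lra]. }
  intros s t Hs Hst Ht.
  assert (Hm1 := Rmin_l (Rmin d1 d) (eps / M)). assert (Hm2 := Rmin_r (Rmin d1 d) (eps / M)).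
  assert (Hm3 := Rmin_l d1 d). assert (Hm4 := Rmin_r d1 d).
  eapply Rle_trans. apply (RInt_le_cst h s t M); auto.
  - apply ex_RInt_cont; auto. intros u Hu. apply HL. lra.
  - intros u Hu. assert (Rabs (u - x) < d1) by (rewrite Rabs_left; lra).
    specialize (Hd1 u H). change (Rabs (h u - h x) < 1) in Hd1.
    unfold M. pose proof (Rabs_triang_inv (h u) (h x)). pose proof (Rle_abs (h u)). lra.
  - assert (t - s <= eps / M) by lra.
    apply Rmult_le_compat_l with (r := M) in H; [|lra].
    replace (M * (eps / M)) with eps in H by (field; lra). lra.
Qed.

Lemma ball_R' (l y : R) (e : R) : ball l e y -> l - e < y < l + e.
Proof.
  intros H. change (Rabs (y - l) < e) in H. apply Rabs_lt_between in H. lra.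
Qed.

Lemma RInt_Chasles_R (h : R -> R) a b c : ex_RInt h a b -> ex_RInt h b c -> RInt h a b + RInt h b c = RInt h a c.
Proof. intros; apply (RInt_Chasles h a b c); auto. Qed.

Lemma exgen_SR h x d d' : 0 < d -> d <= d' -> contR h x d ->
  ex_RInt_gen h (at_right x) (at_point (x + d')) -> SR h x.
Proof.
  intros Hd Hdd HR [l Hl] eps Heps.
  assert (He2 : 0 < eps / 2) by lra.
  specialize (Hl (ball l (mkposreal _ He2)) (locally_ball l _)).
  destruct Hl as [Q R HQ HR' HP].
  apply locally_R in HQ. destruct HQ as [e He]. unfold at_point in HR'.
  exists (Rmin e d). split. { apply Rmin_pos; [apply cond_pos|lra]. }
  intros s t Hs Hst Ht.
  assert (Hm1 := Rmin_l e d). assert (Hm2 := Rmin_r e d).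
  assert (Qs : Q s) by (apply He; [apply ball_R; rewrite Rabs_right; lra | lra]).
  assert (Qt : Q t) by (apply He; [apply ball_R; rewrite Rabs_right; lra | lra]).
  destruct (HP s (x + d') Qs HR') as [ys [Hys Bys]].
  destruct (HP t (x + d') Qt HR') as [yt [Hyt Byt]].
  simpl in *.
  assert (Ei : ex_RInt h s t) by (apply ex_RInt_cont; auto; intros u Hu; apply HR; lra).
  pose proof (RInt_Chasles_R h s t (x + d') Ei (ex_intro _ yt Hyt)) as E.
  rewrite (is_RInt_unique h s (x + d') ys Hys) in E.
  rewrite (is_RInt_unique h t (x + d') yt Hyt) in E.
  apply ball_R' in Bys. apply ball_R' in Byt. simpl in Bys, Byt. lra.
Qed.

Lemma exgen_SL h x d d' : 0 < d -> d <= d' -> contL h x d ->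
  ex_RInt_gen h (at_point (x - d')) (at_left x) -> SL h x.
Proof.
  intros Hd Hdd HL [l Hl] eps Heps.
  assert (He2 : 0 < eps / 2) by lra.
  specialize (Hl (ball l (mkposreal _ He2)) (locally_ball l _)).
  destruct Hl as [Q R HQ HR' HP].
  apply locally_R in HR'. destruct HR' as [e He]. unfold at_point in HQ.
  exists (Rmin e d). split. { apply Rmin_pos; [apply cond_pos|lra]. }
  intros s t Hs Hst Ht.
  assert (Hm1 := Rmin_l e d). assert (Hm2 := Rmin_r e d).
  assert (Qs : R s) by (apply He; [apply ball_R; rewrite Rabs_left; lra | lra]).
  assert (Qt : R t) by (apply He; [apply ball_R; rewrite Rabs_left; lra | lra]).
  destruct (HP (x - d') s HQ Qs) as [ys [Hys Bys]].
  destruct (HP (x - d') t HQ Qt) as [yt [Hyt Byt]].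
  simpl in *.
  assert (Ei : ex_RInt h s t) by (apply ex_RInt_cont; auto; intros u Hu; apply HL; lra).
  pose proof (RInt_Chasles_R h (x - d') s t (ex_intro _ ys Hys) Ei) as E.
  rewrite (is_RInt_unique h (x - d') s ys Hys) in E.
  rewrite (is_RInt_unique h (x - d') t yt Hyt) in E.
  apply ball_R' in Bys. apply ball_R' in Byt. simpl in Bys, Byt. lra.
Qed.

Lemma SR_exgen h x d : 0 < d -> (forall t, 0 <= h t) -> contR h x d -> SR h x ->
  ex_RInt_gen h (at_right x) (at_point (x + d)).
Proof.
  intros Hd Hpos HR HS.
  set (F := fun a => RInt h a (x + d)).
  assert (Hex : forall a, x < a <= x + d -> ex_RInt h a (x + d)).
  { intros a Ha; apply ex_RInt_cont; try lra; intros u Hu; apply HR; lra. }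
  assert (Hl : exists l, filterlim F (at_right x) (locally l)).
  { apply (proj1 (@filterlim_locally_closely R R_CompleteSpace (at_right x) (at_right_proper_filter x) F)).
    apply (proj2 (@filterlim_closely R R_UniformSpace (at_right x) _ F)).
    intros eps. assert (He2 : 0 < eps / 2) by (pose proof (cond_pos eps); lra).
    destruct (HS _ He2) as [del [Hdel Hdel2]].
    exists (fun u => x < u < x + Rmin del d). split.
    - apply locally_R. assert (Hp : 0 < Rmin del d) by (apply Rmin_pos; lra).
      exists (mkposreal _ Hp). intros y Hy Hxy. apply ball_R' in Hy. simpl in Hy. lra.
    - intros u v Hu Hv. apply ball_R.
      assert (Hm1 := Rmin_l del d). assert (Hm2 := Rmin_r del d).
      destruct (Rle_dec u v) as [Huv|Huv].
      + assert (Ei : ex_RInt h u v) by (apply ex_RInt_cont; try lra; intros w Hw; apply HR; lra).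
        pose proof (RInt_Chasles_R h u v (x + d) Ei (Hex v ltac:(lra))).
        unfold F. assert (RInt h u v <= eps / 2) by (apply Hdel2; lra).
        assert (0 <= RInt h u v) by (apply RInt_ge_0; auto; intros; apply Hpos).
        rewrite Rabs_left1; lra.
      + assert (Ei : ex_RInt h v u) by (apply ex_RInt_cont; try lra; intros w Hw; apply HR; lra).
        pose proof (RInt_Chasles_R h v u (x + d) Ei (Hex u ltac:(lra))).
        unfold F. assert (RInt h v u <= eps / 2) by (apply Hdel2; lra).
        assert (0 <= RInt h v u) by (apply RInt_ge_0; auto; try lra; intros; apply Hpos).
        rewrite Rabs_right; lra. }
  destruct Hl as [l Hl]. exists l.
  intros P HP. specialize (Hl P HP).
  apply Filter_prod with (Q := fun a => P (F a) /\ x < a < x + d) (R := fun b => b = x + d).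
  - unfold filtermap in Hl. apply filter_and; auto.
    apply locally_R. exists (mkposreal _ Hd). intros y Hy Hxy. apply ball_R' in Hy. simpl in Hy. lra.
  - reflexivity.
  - intros a b [Pa Ha] ->. exists (F a). split; auto. simpl.
    apply (RInt_correct h a (x + d)). apply Hex; lra.
Qed.

Lemma SL_exgen h x d : 0 < d -> (forall t, 0 <= h t) -> contL h x d -> SL h x ->
  ex_RInt_gen h (at_point (x - d)) (at_left x).
Proof.
  intros Hd Hpos HL HS.
  set (F := fun b => RInt h (x - d) b).
  assert (Hex : forall b, x - d <= b < x -> ex_RInt h (x - d) b).
  { intros b Hb; apply ex_RInt_cont; try lra; intros u Hu; apply HL; lra. }
  assert (Hl : exists l, filterlim F (at_left x) (locally l)).
  { apply (proj1 (@filterlim_locally_closely R R_CompleteSpace (at_left x) (at_left_proper_filter x) F)).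
    apply (proj2 (@filterlim_closely R R_UniformSpace (at_left x) _ F)).
    intros eps. assert (He2 : 0 < eps / 2) by (pose proof (cond_pos eps); lra).
    destruct (HS _ He2) as [del [Hdel Hdel2]].
    exists (fun u => x - Rmin del d < u < x). split.
    - apply locally_R. assert (Hp : 0 < Rmin del d) by (apply Rmin_pos; lra).
      exists (mkposreal _ Hp). intros y Hy Hxy. apply ball_R' in Hy. simpl in Hy. lra.
    - intros u v Hu Hv. apply ball_R.
      assert (Hm1 := Rmin_l del d). assert (Hm2 := Rmin_r del d).
      destruct (Rle_dec u v) as [Huv|Huv].
      + assert (Ei : ex_RInt h u v) by (apply ex_RInt_cont; try lra; intros w Hw; apply HL; lra).
        pose proof (RInt_Chasles_R h (x - d) u v (Hex u ltac:(lra)) Ei).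
        unfold F. assert (RInt h u v <= eps / 2) by (apply Hdel2; lra).
        assert (0 <= RInt h u v) by (apply RInt_ge_0; auto; intros; apply Hpos).
        rewrite Rabs_right; lra.
      + assert (Ei : ex_RInt h v u) by (apply ex_RInt_cont; try lra; intros w Hw; apply HL; lra).
        pose proof (RInt_Chasles_R h (x - d) v u (Hex v ltac:(lra)) Ei).
        unfold F. assert (RInt h v u <= eps / 2) by (apply Hdel2; lra).
        assert (0 <= RInt h v u) by (apply RInt_ge_0; auto; try lra; intros; apply Hpos).
        rewrite Rabs_left1; lra. }
  destruct Hl as [l Hl]. exists l.
  intros P HP. specialize (Hl P HP).
  apply Filter_prod with (Q := fun a => a = x - d) (R := fun b => P (F b) /\ x - d < b < x).
  - reflexivity.
  - unfold filtermap in Hl. apply filter_and; auto.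
    apply locally_R. exists (mkposreal _ Hd). intros y Hy Hxy. apply ball_R' in Hy. simpl in Hy. lra.
  - intros a b -> [Pb Hb]. exists (F b). split; auto. simpl.
    apply (RInt_correct h (x - d) b). apply Hex; lra.
Qed.

Lemma SR_plus h1 h2 x d : 0 < d -> contR h1 x d -> contR h2 x d -> SR h1 x -> SR h2 x ->
  SR (fun t => h1 t + h2 t) x.
Proof.
  intros Hd C1 C2 S1 S2 eps Heps.
  destruct (S1 (eps/2) ltac:(lra)) as [d1 [Hd1 H1]].
  destruct (S2 (eps/2) ltac:(lra)) as [d2 [Hd2 H2]].
  exists (Rmin (Rmin d1 d2) d). split. { repeat apply Rmin_pos; lra. }
  intros s t Hs Hst Ht.
  assert (Hm1 := Rmin_l (Rmin d1 d2) d). assert (Hm2 := Rmin_r (Rmin d1 d2) d).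
  assert (Hm3 := Rmin_l d1 d2). assert (Hm4 := Rmin_r d1 d2).
  assert (E1 : ex_RInt h1 s t) by (apply ex_RInt_cont; auto; intros; apply C1; lra).
  assert (E2 : ex_RInt h2 s t) by (apply ex_RInt_cont; auto; intros; apply C2; lra).
  assert (E : RInt (fun u => h1 u + h2 u) s t = RInt h1 s t + RInt h2 s t) by exact (RInt_plus h1 h2 s t E1 E2).
  rewrite E.
  assert (RInt h1 s t <= eps / 2) by (apply H1; lra).
  assert (RInt h2 s t <= eps / 2) by (apply H2; lra). lra.
Qed.

Lemma SL_plus h1 h2 x d : 0 < d -> contL h1 x d -> contL h2 x d -> SL h1 x -> SL h2 x ->
  SL (fun t => h1 t + h2 t) x.
Proof.
  intros Hd C1 C2 S1 S2 eps Heps.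
  destruct (S1 (eps/2) ltac:(lra)) as [d1 [Hd1 H1]].
  destruct (S2 (eps/2) ltac:(lra)) as [d2 [Hd2 H2]].
  exists (Rmin (Rmin d1 d2) d). split. { repeat apply Rmin_pos; lra. }
  intros s t Hs Hst Ht.
  assert (Hm1 := Rmin_l (Rmin d1 d2) d). assert (Hm2 := Rmin_r (Rmin d1 d2) d).
  assert (Hm3 := Rmin_l d1 d2). assert (Hm4 := Rmin_r d1 d2).
  assert (E1 : ex_RInt h1 s t) by (apply ex_RInt_cont; auto; intros; apply C1; lra).
  assert (E2 : ex_RInt h2 s t) by (apply ex_RInt_cont; auto; intros; apply C2; lra).
  assert (E : RInt (fun u => h1 u + h2 u) s t = RInt h1 s t + RInt h2 s t) by exact (RInt_plus h1 h2 s t E1 E2).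
  rewrite E.
  assert (RInt h1 s t <= eps / 2) by (apply H1; lra).
  assert (RInt h2 s t <= eps / 2) by (apply H2; lra). lra.
Qed.

Lemma SR_scal c h x d : 0 <= c -> 0 < d -> contR h x d -> SR h x -> SR (fun t => c * h t) x.
Proof.
  intros Hc Hd C1 S1 eps Heps.
  assert (Hp : 0 < eps / (c + 1)) by (apply Rdiv_lt_0_compat; lra).
  destruct (S1 _ Hp) as [d1 [Hd1 H1]].
  exists (Rmin d1 d). split. { apply Rmin_pos; lra. }
  intros s t Hs Hst Ht.
  assert (Hm1 := Rmin_l d1 d). assert (Hm2 := Rmin_r d1 d).
  assert (E1 : ex_RInt h s t) by (apply ex_RInt_cont; auto; intros; apply C1; lra).
  assert (E : RInt (fun u => c * h u) s t = c * RInt h s t) by exact (RInt_scal h s t c E1).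
  rewrite E.
  assert (RInt h s t <= eps / (c + 1)) by (apply H1; lra).
  apply Rle_trans with (c * (eps / (c + 1))). apply Rmult_le_compat_l; auto.
  apply Rmult_le_reg_r with (c + 1); [lra|]. field_simplify; [|lra]. nra.
Qed.

Lemma SL_scal c h x d : 0 <= c -> 0 < d -> contL h x d -> SL h x -> SL (fun t => c * h t) x.
Proof.
  intros Hc Hd C1 S1 eps Heps.
  assert (Hp : 0 < eps / (c + 1)) by (apply Rdiv_lt_0_compat; lra).
  destruct (S1 _ Hp) as [d1 [Hd1 H1]].
  exists (Rmin d1 d). split. { apply Rmin_pos; lra. }
  intros s t Hs Hst Ht.
  assert (Hm1 := Rmin_l d1 d). assert (Hm2 := Rmin_r d1 d).
  assert (E1 : ex_RInt h s t) by (apply ex_RInt_cont; auto; intros; apply C1; lra).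
  assert (E : RInt (fun u => c * h u) s t = c * RInt h s t) by exact (RInt_scal h s t c E1).
  rewrite E.
  assert (RInt h s t <= eps / (c + 1)) by (apply H1; lra).
  apply Rle_trans with (c * (eps / (c + 1))). apply Rmult_le_compat_l; auto.
  apply Rmult_le_reg_r with (c + 1); [lra|]. field_simplify; [|lra]. nra.
Qed.

Lemma SR_le g h x d : 0 < d -> contR g x d -> contR h x d ->
  (forall t, x < t < x + d -> g t <= h t) -> SR h x -> SR g x.
Proof.
  intros Hd Cg Ch Hle S eps Heps. destruct (S eps Heps) as [d1 [Hd1 H1]].
  exists (Rmin d1 d). split. { apply Rmin_pos; lra. }
  intros s t Hs Hst Ht.
  assert (Hm1 := Rmin_l d1 d). assert (Hm2 := Rmin_r d1 d).
  eapply Rle_trans. apply RInt_le; auto.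
  apply ex_RInt_cont; auto; intros; apply Cg; lra.
  apply ex_RInt_cont; auto; intros; apply Ch; lra.
  intros u Hu. apply (Hle u). lra.
  apply H1; lra.
Qed.

Lemma SL_le g h x d : 0 < d -> contL g x d -> contL h x d ->
  (forall t, x - d < t < x -> g t <= h t) -> SL h x -> SL g x.
Proof.
  intros Hd Cg Ch Hle S eps Heps. destruct (S eps Heps) as [d1 [Hd1 H1]].
  exists (Rmin d1 d). split. { apply Rmin_pos; lra. }
  intros s t Hs Hst Ht.
  assert (Hm1 := Rmin_l d1 d). assert (Hm2 := Rmin_r d1 d).
  eapply Rle_trans. apply RInt_le; auto.
  apply ex_RInt_cont; auto; intros; apply Cg; lra.
  apply ex_RInt_cont; auto; intros; apply Ch; lra.
  intros u Hu. apply (Hle u). lra.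
  apply H1; lra.
Qed.

Lemma list_sep (s : list R) x : exists d, 0 < d /\ d <= 1/2 /\ forall y, In y s -> y <> x -> d < Rabs (y - x).
Proof.
  induction s as [|a s IH].
  - exists (1/2). split; [lra|split; [lra|]]. intros y [].
  - destruct IH as [d [Hd [Hd2 H]]].
    destruct (Req_dec a x) as [E|E].
    + exists d. split; [auto|split; [auto|]]. intros y [<-|Hy] Hyx; [congruence|auto].
    + assert (Ha : 0 < Rabs (a - x)) by (apply Rabs_pos_lt; lra).
      exists (Rmin d (Rabs (a - x) / 2)). split; [apply Rmin_pos; lra|split].
      * pose proof (Rmin_l d (Rabs (a - x) / 2)); lra.
      * intros y [<-|Hy] Hyx.
        -- pose proof (Rmin_r d (Rabs (a - x) / 2)); lra.
        -- pose proof (Rmin_l d (Rabs (a - x) / 2)). specialize (H y Hy Hyx). lra.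
Qed.

Lemma PC0_iso f : PC0 f -> forall x, exists d, 0 < d /\
  (forall t, x < t <= x + d -> continuous f t) /\ (forall t, x - d <= t < x -> continuous f t).
Proof.
  intros [H1 _] x. destruct (H1 (x - 1) (x + 1)) as [s Hs].
  destruct (list_sep s x) as [d [Hd [Hd2 Hsep]]].
  exists d. split; [auto|split].
  - intros t Ht. apply NNPP. intros Hc.
    assert (Hin : In t s) by (apply Hs; auto; lra).
    specialize (Hsep t Hin ltac:(lra)). rewrite Rabs_right in Hsep; lra.
  - intros t Ht. apply NNPP. intros Hc.
    assert (Hin : In t s) by (apply Hs; auto; lra).
    specialize (Hsep t Hin ltac:(lra)). rewrite Rabs_left in Hsep; lra.
Qed.

Definition cm (f : R -> C) : R -> R := fun t => Cmod (f t).

Lemma contR_mono h x d d' : contR h x d -> d' <= d -> contR h x d'.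
Proof. intros H Hd t Ht; apply H; lra. Qed.
Lemma contL_mono h x d d' : contL h x d -> d' <= d -> contL h x d'.
Proof. intros H Hd t Ht; apply H; lra. Qed.

Lemma PC0_loc f : PC0 f -> forall x, exists d, 0 < d /\
  (forall t, x < t <= x + d -> continuous f t) /\ (forall t, x - d <= t < x -> continuous f t) /\
  contR (cm f) x d /\ contL (cm f) x d /\ SR (cm f) x /\ SL (cm f) x.
Proof.
  intros Hf x. destruct (PC0_iso f Hf x) as [d0 [Hd0 [HR HL]]].
  assert (CR : forall d, d <= d0 -> contR (cm f) x d) by (intros d Hd t Ht; apply ccont_Cmod, HR; lra).
  assert (CL : forall d, d <= d0 -> contL (cm f) x d) by (intros d Hd t Ht; apply ccont_Cmod, HL; lra).
  destruct (classic (continuous f x)) as [Hc|Hc].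
  - exists d0. split; [auto|split; [auto|split; [auto|]]].
    split; [apply CR; lra|split; [apply CL; lra|split]].
    + apply (cont_SR _ x d0); auto. apply ccont_Cmod; auto. apply CR; lra.
    + apply (cont_SL _ x d0); auto. apply ccont_Cmod; auto. apply CL; lra.
  - destruct Hf as [_ H2]. destruct (H2 x Hc) as [d' [Hd' [ER EL]]].
    set (d := Rmin d0 d').
    assert (Hd1 := Rmin_l d0 d'). assert (Hd2 := Rmin_r d0 d').
    assert (Hd : 0 < d) by (apply Rmin_pos; lra). fold d in Hd1, Hd2.
    exists d. split; [exact Hd|]. split.
    { intros t Ht. apply HR. lra. }
    split. { intros t Ht. apply HL. lra. }
    split. { apply CR; lra. }
    split. { apply CL; lra. }
    split.
    + exact (exgen_SR _ x d d' Hd Hd2 (CR d Hd1) ER).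
    + exact (exgen_SL _ x d d' Hd Hd2 (CL d Hd1) EL).
Qed.

Lemma cm_pos f t : 0 <= cm f t.
Proof. apply Cmod_ge_0. Qed.

Lemma PC0_plus f g : PC0 f -> PC0 g -> PC0 (fun t => (f t + g t)%C).
Proof.
  intros Hf Hg. split.
  - intros a b. destruct (proj1 Hf a b) as [sf Hsf]. destruct (proj1 Hg a b) as [sg Hsg].
    exists (sf ++ sg). intros x Hx Hc. apply in_or_app.
    destruct (classic (continuous f x)) as [C1|C1].
    + destruct (classic (continuous g x)) as [C2|C2].
      * exfalso; apply Hc; apply ccont_plus; auto.
      * right; apply Hsg; auto.
    + left; apply Hsf; auto.
  - intros x Hc.
    destruct (PC0_loc f Hf x) as [d1 [Hd1 [FR [FL [CR1 [CL1 [SR1 SL1]]]]]]].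
    destruct (PC0_loc g Hg x) as [d2 [Hd2 [GR [GL [CR2 [CL2 [SR2 SL2]]]]]]].
    set (d := Rmin d1 d2).
    assert (Hm1 := Rmin_l d1 d2). assert (Hm2 := Rmin_r d1 d2).
    assert (Hd : 0 < d) by (apply Rmin_pos; lra). fold d in Hm1, Hm2.
    assert (CR : contR (cm (fun t => (f t + g t)%C)) x d).
    { intros t Ht; apply ccont_Cmod, ccont_plus; [apply FR|apply GR]; lra. }
    assert (CL : contL (cm (fun t => (f t + g t)%C)) x d).
    { intros t Ht; apply ccont_Cmod, ccont_plus; [apply FL|apply GL]; lra. }
    exists d. split; [auto|split].
    + apply SR_exgen; auto. apply cm_pos.
      apply (SR_le _ (fun t => cm f t + cm g t) x d); auto.
      * intros t Ht. apply rcont_plus; [apply CR1|apply CR2]; lra.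
      * intros t Ht. apply Cmod_triangle.
      * apply (SR_plus _ _ x d); auto; [eapply contR_mono; eauto|eapply contR_mono; eauto].
    + apply SL_exgen; auto. apply cm_pos.
      apply (SL_le _ (fun t => cm f t + cm g t) x d); auto.
      * intros t Ht. apply rcont_plus; [apply CL1|apply CL2]; lra.
      * intros t Ht. apply Cmod_triangle.
      * apply (SL_plus _ _ x d); auto; [eapply contL_mono; eauto|eapply contL_mono; eauto].
Qed.

Lemma PC0_mulc g f : (forall t, continuous g t) -> PC0 f -> PC0 (fun t => (g t * f t)%C).
Proof.
  intros Hg Hf. split.
  - intros a b. destruct (proj1 Hf a b) as [sf Hsf].
    exists sf. intros x Hx Hc. apply Hsf; auto. intros C1; apply Hc; apply ccont_mult; auto.
  - intros x Hc.
    destruct (PC0_loc f Hf x) as [d1 [Hd1 [FR [FL [CR1 [CL1 [SR1 SL1]]]]]]].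
    destruct (continuity_ab_maj (cm g) (x - 1) (x + 1)) as [Mx [HM HMx]]. lra.
    { intros c Hc'. apply continuity_pt_filterlim. apply ccont_Cmod, Hg. }
    set (M := cm g Mx). assert (HM0 : 0 <= M) by apply cm_pos.
    set (d := Rmin d1 1).
    assert (Hm1 := Rmin_l d1 1). assert (Hm2 := Rmin_r d1 1).
    assert (Hd : 0 < d) by (apply Rmin_pos; lra). fold d in Hm1, Hm2.
    assert (CR : contR (cm (fun t => (g t * f t)%C)) x d).
    { intros t Ht; apply ccont_Cmod, ccont_mult; [apply Hg|apply FR]; lra. }
    assert (CL : contL (cm (fun t => (g t * f t)%C)) x d).
    { intros t Ht; apply ccont_Cmod, ccont_mult; [apply Hg|apply FL]; lra. }
    exists d. split; [auto|split].
    + apply SR_exgen; auto. apply cm_pos.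
      apply (SR_le _ (fun t => M * cm f t) x d); auto.
      * intros t Ht. apply rcont_mult; [apply rcont_const|apply CR1]; lra.
      * intros t Ht. unfold cm. rewrite Cmod_mult. apply Rmult_le_compat_r. apply Cmod_ge_0.
        apply HM; lra.
      * apply (SR_scal M _ x d); auto. eapply contR_mono; eauto.
    + apply SL_exgen; auto. apply cm_pos.
      apply (SL_le _ (fun t => M * cm f t) x d); auto.
      * intros t Ht. apply rcont_mult; [apply rcont_const|apply CL1]; lra.
      * intros t Ht. unfold cm. rewrite Cmod_mult. apply Rmult_le_compat_r. apply Cmod_ge_0.
        apply HM; lra.
      * apply (SL_scal M _ x d); auto. eapply contL_mono; eauto.
Qed.

Lemma cont_PC0 f : (forall t, continuous f t) -> PC0 f.
Proof.
  intros H. split.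
  - intros a b. exists nil. intros x _ Hc. exfalso; auto.
  - intros x Hc. exfalso; auto.
Qed.

Lemma PC0_ext f g : (forall t, f t = g t) -> PC0 f -> PC0 g.
Proof. intros E H. replace g with f; auto. apply functional_extensionality; auto. Qed.

Definition smooth (g : R -> C) := exists g1 g2, cderiv g g1 /\ cderiv g1 g2 /\ forall t, continuous g2 t.

Lemma Cp2_iff f : Cp 2 f <-> cdiff f /\ cdiff (cD f) /\ PC0 (cD (cD f)).
Proof. simpl; tauto. Qed.

Lemma Cp2_plus f g : Cp 2 f -> Cp 2 g -> Cp 2 (fun t => (f t + g t)%C).
Proof.
  rewrite !Cp2_iff. intros [F1 [F2 F3]] [G1 [G2 G3]].
  assert (D1 := cderiv_plus _ _ _ _ (cdiff_cderiv _ F1) (cdiff_cderiv _ G1)).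
  assert (D2 := cderiv_plus _ _ _ _ (cdiff_cderiv _ F2) (cdiff_cderiv _ G2)).
  split; [eapply cderiv_cdiff; eauto|]. rewrite (cderiv_cD _ _ D1).
  split; [eapply cderiv_cdiff; eauto|]. rewrite (cderiv_cD _ _ D2).
  apply PC0_plus; auto.
Qed.

Lemma Cp2_mul g f : smooth g -> Cp 2 f -> Cp 2 (fun t => (g t * f t)%C).
Proof.
  intros [g1 [g2 [Hg1 [Hg2 Hc]]]]. rewrite !Cp2_iff. intros [F1 [F2 F3]].
  assert (Q1 := cdiff_cderiv _ F1). assert (Q2 := cdiff_cderiv _ F2).
  assert (D1 := cderiv_mult _ _ _ _ Hg1 Q1).
  assert (D2 := cderiv_plus _ _ _ _ (cderiv_mult _ _ _ _ Hg2 Q1) (cderiv_mult _ _ _ _ Hg1 Q2)).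
  split; [eapply cderiv_cdiff; eauto|]. rewrite (cderiv_cD _ _ D1).
  split; [eapply cderiv_cdiff; eauto|]. rewrite (cderiv_cD _ _ D2).
  apply PC0_ext with (f := fun t => ((g2 t * f t + g1 t * cD f t + g1 t * cD f t) + g t * cD (cD f) t)%C).
  { intros t; ring. }
  apply PC0_plus.
  - apply cont_PC0. intros t.
    assert (Cf := cdiff_cont f t F1). assert (Cf' := cdiff_cont (cD f) t F2).
    assert (C1 := cderiv_cont g1 g2 t Hg2).
    repeat apply ccont_plus; apply ccont_mult; auto.
  - apply PC0_mulc; auto. intros t; eapply cderiv_cont; eauto.
Qed.

Lemma smooth_ebl k : smooth (ebl k).
Proof.
  exists (fun x => (Ci * k * ebl k x)%C), (fun x => (Ci * k * (Ci * k * ebl k x))%C).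
  split; [apply cderiv_ebl|split].
  - apply cderiv_scal, cderiv_ebl.
  - intros t. apply ccont_mult; [apply ccont_const|]. apply ccont_mult; [apply ccont_const|].
    eapply cderiv_cont; apply cderiv_ebl.
Qed.

Lemma smooth_const (c : C) : smooth (fun _ => c).
Proof.
  exists (fun _ => 0%C), (fun _ => 0%C). split; [apply cderiv_const|split; [apply cderiv_const|]].
  intros; apply ccont_const.
Qed.

Lemma smooth_id : smooth (fun x => RtoC x).
Proof.
  exists (fun _ => 1%C), (fun _ => 0%C). split; [apply cderiv_id|split; [apply cderiv_const|]].
  intros; apply ccont_const.
Qed.

Lemma Cp2_scal (c : C) f : Cp 2 f -> Cp 2 (fun t => (c * f t)%C).
Proof. intros; apply (Cp2_mul (fun _ => c)); auto; apply smooth_const. Qed.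

Lemma Cp2_ext f g : (forall t, f t = g t) -> Cp 2 f -> Cp 2 g.
Proof. intros E H. replace g with f; auto. apply functional_extensionality; auto. Qed.

Lemma Cp2_zero : Cp 2 (fun _ => 0%C).
Proof.
  apply Cp2_iff. assert (D := cderiv_const 0%C).
  split; [eapply cderiv_cdiff; eauto|]. rewrite (cderiv_cD _ _ D).
  split; [eapply cderiv_cdiff; eauto|]. rewrite (cderiv_cD _ _ D).
  apply cont_PC0; intros; apply ccont_const.
Qed.

Definition periodic (gamma : R) (f : R -> C) := forall x, f (x + gamma) = f x.

Lemma cD_periodic gamma f : periodic gamma f -> periodic gamma (cD f).
Proof.
  intros H x. rewrite <- cD_shift. f_equal. apply functional_extensionality; intros; apply H.
Qed.

Lemma Cmult_cancel (a b c : C) : a <> 0%C -> (a * b)%C = (a * c)%C -> b = c.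
Proof.
  intros Ha E. replace b with (/ a * (a * b))%C by (field; auto).
  rewrite E. field; auto.
Qed.

Lemma Cmult_zero (a b : C) : a <> 0%C -> (a * b)%C = 0%C -> b = 0%C.
Proof. intros Ha E. apply (Cmult_cancel a); auto. rewrite E; ring. Qed.

Lemma RtoC_nz (r : R) : r <> 0 -> RtoC r <> 0%C.
Proof. intros H E. injection E as E. auto. Qed.

Lemma Ci2 : (Ci * Ci)%C = (-1)%C.
Proof. apply injective_projections; simpl; ring. Qed.

Definition sol W V lam (psi : R -> C) := cdiff psi /\ cdiff (cD psi) /\ forall x, Lop W V psi x = (RtoC lam * psi x)%C.

Lemma Eset_sol W V lam psi : Eset W V lam psi -> sol W V lam psi.
Proof. intros [H1 H2]. apply Cp2_iff in H1. destruct H1 as [A [B _]]. split; auto. Qed.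

Lemma Lop_lin W V (a b : C) f g x : cdiff f -> cdiff (cD f) -> cdiff g -> cdiff (cD g) ->
  Lop W V (fun t => (a * f t + b * g t)%C) x = (a * Lop W V f x + b * Lop W V g x)%C.
Proof.
  intros F1 F2 G1 G2.
  assert (D1 := cderiv_plus _ _ _ _ (cderiv_scal a _ _ (cdiff_cderiv _ F1)) (cderiv_scal b _ _ (cdiff_cderiv _ G1))).
  assert (D2 := cderiv_plus _ _ _ _ (cderiv_scal a _ _ (cdiff_cderiv _ F2)) (cderiv_scal b _ _ (cdiff_cderiv _ G2))).
  unfold Lop. rewrite (cderiv_cD _ _ D1). rewrite (cderiv_cD _ _ D2). ring.
Qed.

Lemma sol_lin W V lam (a b : C) f g : sol W V lam f -> sol W V lam g ->
  sol W V lam (fun t => (a * f t + b * g t)%C).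
Proof.
  intros [F1 [F2 F3]] [G1 [G2 G3]].
  assert (D1 := cderiv_plus _ _ _ _ (cderiv_scal a _ _ (cdiff_cderiv _ F1)) (cderiv_scal b _ _ (cdiff_cderiv _ G1))).
  assert (D2 := cderiv_plus _ _ _ _ (cderiv_scal a _ _ (cdiff_cderiv _ F2)) (cderiv_scal b _ _ (cdiff_cderiv _ G2))).
  split; [eapply cderiv_cdiff; eauto|]. split.
  - rewrite (cderiv_cD _ _ D1). eapply cderiv_cdiff; eauto.
  - intros x. rewrite Lop_lin by auto. rewrite F3, G3. ring.
Qed.

Lemma sol_shift W V lam gamma f : periodic gamma W -> periodic gamma V -> sol W V lam f ->
  sol W V lam (fun t => f (t + gamma)).
Proof.
  intros HW HV [F1 [F2 F3]].
  assert (D1 := cderiv_shift _ _ gamma (cdiff_cderiv _ F1)).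
  assert (D2 := cderiv_shift _ _ gamma (cdiff_cderiv _ F2)).
  split; [eapply cderiv_cdiff; eauto|]. split.
  - rewrite (cderiv_cD _ _ D1). eapply cderiv_cdiff; eauto.
  - intros x. unfold Lop. rewrite (cderiv_cD _ _ D1). rewrite (cderiv_cD _ _ D2).
    rewrite <- (HW x), <- (HV x). apply F3.
Qed.

Lemma Lop_ebl W V k q x : cdiff q -> cdiff (cD q) ->
  Lop W V (fun t => (ebl k t * q t)%C) x = (ebl k x * Dk W V k q x)%C.
Proof.
  intros Q1 Q2.
  assert (E1 := cderiv_ebl k). assert (E2 := cderiv_scal (Ci * k) _ _ E1).
  assert (D1 := cderiv_mult _ _ _ _ E1 (cdiff_cderiv _ Q1)).
  assert (D2 := cderiv_plus _ _ _ _ (cderiv_mult _ _ _ _ E2 (cdiff_cderiv _ Q1))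
                                   (cderiv_mult _ _ _ _ E1 (cdiff_cderiv _ Q2))).
  unfold Lop. rewrite (cderiv_cD _ _ D1). rewrite (cderiv_cD _ _ D2). unfold Dk.
  replace (Ci * k * (Ci * k * ebl k x))%C with (- (k * k) * ebl k x)%C.
  ring. transitivity ((Ci * Ci) * (k * k * ebl k x))%C; [|ring].
  rewrite Ci2. ring.
Qed.

Lemma Dk_lin2 W V k q1 q2 x : cdiff q1 -> cdiff (cD q1) -> cdiff q2 -> cdiff (cD q2) ->
  Dk W V k (fun t => (q1 t + RtoC t * q2 t)%C) x =
  (Dk W V k q1 x + RtoC x * Dk W V k q2 x + (W x - 2 * Ci * k) * q2 x - 2 * cD q2 x)%C.
Proof.
  intros A1 A2 B1 B2.
  assert (D1 := cderiv_plus _ _ _ _ (cdiff_cderiv _ A1) (cderiv_mult _ _ _ _ cderiv_id (cdiff_cderiv _ B1))).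
  assert (D2 := cderiv_plus _ _ _ _ (cdiff_cderiv _ A2)
                  (cderiv_plus _ _ _ _ (cderiv_mult _ _ _ _ (cderiv_const 1%C) (cdiff_cderiv _ B1))
                                       (cderiv_mult _ _ _ _ cderiv_id (cdiff_cderiv _ B2)))).
  unfold Dk. rewrite (cderiv_cD _ _ D1). rewrite (cderiv_cD _ _ D2). ring.
Qed.

Lemma cdiff_lin2 q1 q2 : cdiff q1 -> cdiff q2 -> cdiff (fun t => (q1 t + RtoC t * q2 t)%C).
Proof.
  intros A B. eapply cderiv_cdiff.
  apply (cderiv_plus _ _ _ _ (cdiff_cderiv _ A) (cderiv_mult _ _ _ _ cderiv_id (cdiff_cderiv _ B))).
Qed.

Lemma ebl_cancel k x (a b : C) : (ebl k x * a)%C = (ebl k x * b)%C -> a = b.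
Proof. apply Cmult_cancel, ebl_nz. Qed.

Lemma floquet_form W V lam gamma k psi : Eset W V lam psi ->
  (forall x, psi (x + gamma) = (mult_ gamma k * psi x)%C) ->
  exists p, Cpg 2 gamma p /\ (forall x, Dk W V k p x = (RtoC lam * p x)%C) /\
            forall x, psi x = (ebl k x * p x)%C.
Proof.
  intros [HC HL] Hper.
  set (p := fun x => (ebl (- k) x * psi x)%C).
  assert (Hp : forall x, psi x = (ebl k x * p x)%C).
  { intros x. unfold p. rewrite Cmult_assoc, (Cmult_comm (ebl k x)), ebl_opp. ring. }
  assert (Cp : Cp 2 p) by (apply Cp2_mul; auto; apply smooth_ebl).
  exists p. split; [split; auto|split; auto].
  - intros x. unfold p. rewrite Hper, ebl_period. unfold mult_.
    transitivity ((ebl (- k) gamma * ebl k gamma) * (ebl (- k) x * psi x))%C. ring.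
    rewrite ebl_opp. ring.
  - intros x. apply Cp2_iff in Cp. destruct Cp as [P1 [P2 _]].
    apply (ebl_cancel k x). rewrite <- Lop_ebl by auto.
    replace (fun t => (ebl k t * p t)%C) with psi by (apply functional_extensionality; auto).
    rewrite HL, Hp. ring.
Qed.

Lemma floquet_Eset W V lam k p : Cp 2 p -> (forall x, Dk W V k p x = (RtoC lam * p x)%C) ->
  Eset W V lam (fun x => (ebl k x * p x)%C).
Proof.
  intros Hp HD. split.
  - apply Cp2_mul; auto; apply smooth_ebl.
  - intros x. apply Cp2_iff in Hp. destruct Hp as [P1 [P2 _]].
    rewrite Lop_ebl by auto. rewrite HD. ring.
Qed.

Lemma floquet_mult gamma k p : periodic gamma p ->
  forall x, (ebl k (x + gamma)%R * p (x + gamma)%R)%C = (mult_ gamma k * (ebl k x * p x))%C.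
Proof. intros H x. rewrite H, ebl_period. ring. Qed.

Lemma sep1 gamma f g : gamma <> 0 -> periodic gamma f -> periodic gamma g ->
  (forall x, (f x + RtoC x * g x)%C = 0%C) -> forall x, g x = 0%C.
Proof.
  intros Hg Pf Pg H x. pose proof (H x) as A. pose proof (H (x + gamma)) as B.
  rewrite Pf, Pg in B. apply (Cmult_zero (RtoC gamma)). apply RtoC_nz; auto.
  rewrite RtoC_plus in B.
  transitivity ((f x + RtoC (x + gamma) * g x) - (f x + RtoC x * g x))%C.
  rewrite RtoC_plus. ring. rewrite A. rewrite RtoC_plus. rewrite B. ring.
Qed.

Lemma mult_nz gamma k : mult_ gamma k <> 0%C.
Proof. apply ebl_nz. Qed.

Lemma sep2 gamma k1 k2 f g : 0 < gamma -> ~ congr gamma k1 k2 -> periodic gamma f -> periodic gamma g ->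
  (forall x, (ebl k1 x * f x + ebl k2 x * g x)%C = 0%C) -> forall x, f x = 0%C /\ g x = 0%C.
Proof.
  intros Hg Hk Pf Pg H x.
  assert (Hm : (mult_ gamma k1 - mult_ gamma k2)%C <> 0%C).
  { intros E. apply Hk. apply mult_congr; auto.
    replace (mult_ gamma k1) with (mult_ gamma k1 - mult_ gamma k2 + mult_ gamma k2)%C by ring.
    rewrite E; ring. }
  pose proof (H x) as A. pose proof (H (x + gamma)) as B.
  rewrite Pf, Pg, !ebl_period in B.
  assert (G : g x = 0%C).
  { apply (Cmult_zero (ebl k2 x)); [apply ebl_nz|].
    apply (Cmult_zero _ _ Hm).
    transitivity (mult_ gamma k1 * (ebl k1 x * f x + ebl k2 x * g x) -
                  (mult_ gamma k1 * ebl k1 x * f x + mult_ gamma k2 * ebl k2 x * g x))%C. ring.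
    rewrite A, B. ring. }
  split; auto.
  apply (Cmult_zero (ebl k1 x)); [apply ebl_nz|]. rewrite <- A, G. ring.
Qed.

Lemma isd_cont (E : R -> R) (dE : R) t : is_derive E t dE -> continuity_pt E t.
Proof.
  intros H. apply continuity_pt_filterlim. apply (ex_derive_continuous E). eexists; eauto.
Qed.

Lemma isd_RInt (C : R -> R) z d s t : z < s < z + d -> z < t < z + d ->
  (forall u, z < u < z + d -> continuous C u) ->
  is_derive (fun b => RInt C s b) t (C t).
Proof.
  intros Hs Ht HC. apply (is_derive_RInt C (fun b => RInt C s b) s t).
  - apply locally_R. assert (Hp : 0 < Rmin (t - z) (z + d - t)) by (apply Rmin_pos; lra).
    exists (mkposreal _ Hp). intros b Hb. simpl in Hb.
    assert (H1 := Rmin_l (t - z) (z + d - t)). assert (H2 := Rmin_r (t - z) (z + d - t)).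
    apply Rabs_lt_between in Hb.
    apply (RInt_correct C s b). apply (@ex_RInt_continuous R_CompleteNormedModule C s b).
    intros u Hu. apply HC. split.
    + apply Rlt_le_trans with (Rmin s b); [|tauto]. apply Rmin_case; lra.
    + apply Rle_lt_trans with (Rmax s b); [tauto|]. apply Rmax_case; lra.
  - apply HC; auto.
Qed.

Lemma gronwall_R (E dE C : R -> R) z d : 0 < d ->
  (forall t, is_derive E t (dE t)) -> (forall t, 0 <= E t) -> E z = 0 ->
  (forall t, dE t <= C t * E t) -> (forall t, z < t < z + d -> continuous C t) ->
  (forall t, 0 <= C t) -> SR C z -> exists del, 0 < del /\ forall t, z <= t <= z + del -> E t = 0.
Proof.
  intros Hd HE Hpos Hz Hb HC HCp HS.
  destruct (HS (1/2) ltac:(lra)) as [d0 [Hd0 Hs0]].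
  set (del := Rmin d0 d / 2).
  assert (Hm1 := Rmin_l d0 d). assert (Hm2 := Rmin_r d0 d).
  assert (Hdel : 0 < del) by (unfold del; assert (0 < Rmin d0 d) by (apply Rmin_pos; lra); lra).
  exists del. split; auto.
  destruct (continuity_ab_maj E z (z + del)) as [Mx [HM HMx]]. lra.
  { intros c _. apply (isd_cont E (dE c) c (HE c)). }
  set (M := E Mx).
  assert (HM0 : M <= 0).
  { apply Rnot_lt_le. intros HMp.
    assert (HMxz : z < Mx).
    { destruct (Req_dec Mx z) as [E1|E1]; [|lra]. unfold M in HMp; rewrite E1, Hz in HMp; lra. }
    assert (Cz := isd_cont E (dE z) z (HE z)).
    apply continuity_pt_filterlim in Cz.
    assert (HM4 : 0 < M / 4) by lra.
    apply filterlim_locally with (eps := mkposreal _ HM4) in Cz.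
    apply locally_R in Cz. destruct Cz as [eta Heta].
    set (s := z + Rmin eta (Mx - z) / 2).
    assert (Hmin1 := Rmin_l eta (Mx - z)). assert (Hmin2 := Rmin_r eta (Mx - z)).
    assert (Hmp : 0 < Rmin eta (Mx - z)) by (apply Rmin_pos; [apply cond_pos|lra]).
    assert (Hs1 : z < s) by (unfold s; lra). assert (Hs2 : s < Mx) by (unfold s; lra).
    assert (Es : E s < M / 4).
    { assert (Hb' := Heta s). simpl in Hb'. apply ball_R' in Hb'.
      - rewrite Hz in Hb'. lra.
      - apply ball_R; rewrite Rabs_right; unfold s; lra. }
    set (H := fun t => E t - M * RInt C s t).
    assert (HD : forall t, s <= t <= Mx -> is_derive H t (dE t - M * C t)).
    { intros t Ht. unfold H. apply isd_minus. apply HE.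
      apply is_derive_scal. apply (isd_RInt C z d s t); auto; unfold del in *; lra. }
    destruct (MVT_gen H s Mx (fun t => dE t - M * C t)) as [c [Hc Hc2]].
    { intros t Ht. rewrite Rmin_left, Rmax_right in Ht by lra. apply HD; lra. }
    { intros t Ht. rewrite Rmin_left, Rmax_right in Ht by lra. eapply isd_cont; apply HD; lra. }
    rewrite Rmin_left, Rmax_right in Hc by lra.
    assert (Hdc : dE c - M * C c <= 0).
    { assert (E c <= M) by (apply HM; lra). specialize (Hb c). specialize (HCp c). nra. }
    assert (HHs : H s = E s) by (unfold H; rewrite RInt_point; unfold zero; simpl; ring).
    assert (Hint : RInt C s Mx <= 1/2) by (apply Hs0; unfold del in *; lra).
    assert (HMx' : H Mx = M - M * RInt C s Mx) by reflexivity.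
    assert (Hle : H Mx <= H s) by nra.
    rewrite HMx', HHs in Hle.
    assert (M * RInt C s Mx <= M * (1/2)) by (apply Rmult_le_compat_l; lra). lra. }
  intros t Ht. specialize (HM t Ht). specialize (Hpos t). fold M in HM. lra.
Qed.

Lemma gronwall_L (E dE C : R -> R) z d : 0 < d ->
  (forall t, is_derive E t (dE t)) -> (forall t, 0 <= E t) -> E z = 0 ->
  (forall t, - (C t * E t) <= dE t) -> (forall t, z - d < t < z -> continuous C t) ->
  (forall t, 0 <= C t) -> SL C z -> exists del, 0 < del /\ forall t, z - del <= t <= z -> E t = 0.
Proof.
  intros Hd HE Hpos Hz Hb HC HCp HS.
  destruct (HS (1/2) ltac:(lra)) as [d0 [Hd0 Hs0]].
  set (del := Rmin d0 d / 2).
  assert (Hm1 := Rmin_l d0 d). assert (Hm2 := Rmin_r d0 d).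
  assert (Hdel : 0 < del) by (unfold del; assert (0 < Rmin d0 d) by (apply Rmin_pos; lra); lra).
  exists del. split; auto.
  destruct (continuity_ab_maj E (z - del) z) as [Mx [HM HMx]]. lra.
  { intros c _. apply (isd_cont E (dE c) c (HE c)). }
  set (M := E Mx).
  assert (HM0 : M <= 0).
  { apply Rnot_lt_le. intros HMp.
    assert (HMxz : Mx < z).
    { destruct (Req_dec Mx z) as [E1|E1]; [|lra]. unfold M in HMp; rewrite E1, Hz in HMp; lra. }
    assert (Cz := isd_cont E (dE z) z (HE z)).
    apply continuity_pt_filterlim in Cz.
    assert (HM4 : 0 < M / 4) by lra.
    apply filterlim_locally with (eps := mkposreal _ HM4) in Cz.
    apply locally_R in Cz. destruct Cz as [eta Heta].
    set (s := z - Rmin eta (z - Mx) / 2).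
    assert (Hmin1 := Rmin_l eta (z - Mx)). assert (Hmin2 := Rmin_r eta (z - Mx)).
    assert (Hmp : 0 < Rmin eta (z - Mx)) by (apply Rmin_pos; [apply cond_pos|lra]).
    assert (Hs1 : s < z) by (unfold s; lra). assert (Hs2 : Mx < s) by (unfold s; lra).
    assert (Es : E s < M / 4).
    { assert (Hb' := Heta s). simpl in Hb'. apply ball_R' in Hb'.
      - rewrite Hz in Hb'. lra.
      - apply ball_R; rewrite Rabs_left; unfold s; lra. }
    set (H := fun t => E t + M * RInt C s t).
    assert (HCd : forall t, z - d < t < z -> continuous C t) by auto.
    assert (HD : forall t, Mx <= t <= s -> is_derive H t (dE t + M * C t)).
    { intros t Ht. unfold H. apply isd_plus. apply HE.
      apply is_derive_scal. apply (isd_RInt C (z - d) d s t); auto;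
      unfold del in *; try lra. intros u Hu; apply HC; lra. }
    destruct (MVT_gen H Mx s (fun t => dE t + M * C t)) as [c [Hc Hc2]].
    { intros t Ht. rewrite Rmin_left, Rmax_right in Ht by lra. apply HD; lra. }
    { intros t Ht. rewrite Rmin_left, Rmax_right in Ht by lra. eapply isd_cont; apply HD; lra. }
    rewrite Rmin_left, Rmax_right in Hc by lra.
    assert (Hdc : 0 <= dE c + M * C c).
    { assert (E c <= M) by (apply HM; lra). specialize (Hb c). specialize (HCp c). nra. }
    assert (HHs : H s = E s) by (unfold H; rewrite RInt_point; unfold zero; simpl; ring).
    assert (Hint : RInt C Mx s <= 1/2) by (apply Hs0; unfold del in *; lra).
    assert (Hsw : RInt C s Mx = - RInt C Mx s).
    { rewrite <- (opp_RInt_swap C Mx s). reflexivity.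
      apply (@ex_RInt_continuous R_CompleteNormedModule C Mx s).
      intros u Hu. rewrite Rmin_left, Rmax_right in Hu by lra. apply HC. unfold del in *; lra. }
    assert (HMx' : H Mx = M + M * RInt C s Mx) by reflexivity.
    assert (Hle : H Mx <= H s) by nra.
    rewrite HMx', HHs, Hsw in Hle.
    assert (M * RInt C Mx s <= M * (1/2)) by (apply Rmult_le_compat_l; lra). lra. }
  intros t Ht. specialize (HM t Ht). specialize (Hpos t). fold M in HM. lra.
Qed.

Definition Ef (psi : R -> C) t :=
  fst (psi t) * fst (psi t) + snd (psi t) * snd (psi t) +
  fst (cD psi t) * fst (cD psi t) + snd (cD psi t) * snd (cD psi t).
Definition dEf (psi : R -> C) t :=
  2 * (fst (psi t) * fst (cD psi t) + snd (psi t) * snd (cD psi t) +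
       fst (cD psi t) * fst (cD (cD psi) t) + snd (cD psi t) * snd (cD (cD psi) t)).

Lemma Ef_pos psi t : 0 <= Ef psi t.
Proof. unfold Ef. nra. Qed.

Lemma Ef_derive psi : cdiff psi -> cdiff (cD psi) -> forall t, is_derive (Ef psi) t (dEf psi t).
Proof.
  intros H1 H2 t. destruct (cdiff_cderiv _ H1 t) as [A1 A2]. destruct (cdiff_cderiv _ H2 t) as [B1 B2].
  unfold Ef.
  refine (isd_val _ _ _ _ (isd_plus _ _ _ _ _ (isd_plus _ _ _ _ _ (isd_plus _ _ _ _ _
     (isd_mult _ _ _ _ _ A1 A1) (isd_mult _ _ _ _ _ A2 A2)) (isd_mult _ _ _ _ _ B1 B1)) (isd_mult _ _ _ _ _ B2 B2)) _).
  unfold dEf. ring.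
Qed.

Lemma bound_aux P Q R v1 w1 v2 E cw cv : 2 * Rabs P <= E -> 2 * Rabs R <= E -> 0 <= Q -> Q <= E ->
  Rabs w1 <= cw -> Rabs v1 <= cv -> Rabs v2 <= cv ->
  Rabs (2 * (P * (1 + v1) + w1 * Q + v2 * R)) <= (1 + 2 * cw + 2 * cv) * E.
Proof.
  intros HP HR HQ HQE Hw Hv1 Hv2.
  assert (HE : 0 <= E) by (pose proof (Rabs_pos P); lra).
  rewrite Rabs_mult, Rabs_right by lra.
  eapply Rle_trans. apply Rmult_le_compat_l; [lra|].
  eapply Rle_trans. apply Rabs_triang. apply Rplus_le_compat_r. apply Rabs_triang.
  rewrite !Rabs_mult.
  assert (A1 : Rabs (1 + v1) <= 1 + cv) by (eapply Rle_trans; [apply Rabs_triang|]; rewrite Rabs_R1; lra).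
  assert (A2 : Rabs P * Rabs (1 + v1) <= Rabs P * (1 + cv)) by (apply Rmult_le_compat_l; [apply Rabs_pos|auto]).
  assert (A3 : Rabs w1 * Rabs Q <= cw * E).
  { rewrite (Rabs_right Q) by lra. apply Rmult_le_compat; auto; apply Rabs_pos. }
  assert (A4 : Rabs v2 * Rabs R <= cv * Rabs R) by (apply Rmult_le_compat_r; [apply Rabs_pos|auto]).
  assert (A5 : 0 <= cv) by (pose proof (Rabs_pos v1); lra).
  assert (A6 : Rabs P * (1 + cv) <= E / 2 * (1 + cv)) by (apply Rmult_le_compat_r; lra).
  assert (A7 : cv * Rabs R <= cv * (E / 2)) by (apply Rmult_le_compat_l; lra).
  nra.
Qed.

Lemma Cv_bound (v : C) (lam : R) : Cmod (v - RtoC lam)%C <= Cmod v + Rabs lam.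
Proof.
  unfold Cminus. eapply Rle_trans; [apply Cmod_triangle|]. rewrite Cmod_opp, Cmod_R. lra.
Qed.

Definition Cf (W V : R -> C) (lam : R) t := (1 + 2 * Rabs lam) + (2 * cm W t + 2 * cm V t).

Lemma Ef_bound W V lam psi : sol W V lam psi -> forall t, Rabs (dEf psi t) <= Cf W V lam t * Ef psi t.
Proof.
  intros [H1 [H2 H3]] t.
  assert (Hpp : cD (cD psi) t = (W t * cD psi t + (V t - RtoC lam) * psi t)%C).
  { specialize (H3 t). unfold Lop in H3.
    replace (cD (cD psi) t) with (- (- cD (cD psi) t + W t * cD psi t + V t * psi t) + W t * cD psi t + V t * psi t)%C by ring.
    rewrite H3. ring. }
  assert (F1 : fst (cD (cD psi) t) = fst (W t) * fst (cD psi t) - snd (W t) * snd (cD psi t) + ((fst (V t) - lam) * fst (psi t) - snd (V t) * snd (psi t))) by (rewrite Hpp; simpl; ring).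
  assert (F2 : snd (cD (cD psi) t) = fst (W t) * snd (cD psi t) + snd (W t) * fst (cD psi t) + ((fst (V t) - lam) * snd (psi t) + snd (V t) * fst (psi t))) by (rewrite Hpp; simpl; ring).
  assert (Eq : dEf psi t = 2 * ((fst (psi t) * fst (cD psi t) + snd (psi t) * snd (cD psi t)) * (1 + (fst (V t) - lam))
      + fst (W t) * (fst (cD psi t) * fst (cD psi t) + snd (cD psi t) * snd (cD psi t))
      + snd (V t) * (fst (psi t) * snd (cD psi t) - snd (psi t) * fst (cD psi t))))
    by (unfold dEf; rewrite F1, F2; ring).
  rewrite Eq. unfold Ef.
  set (a := fst (psi t)). set (b := snd (psi t)). set (c := fst (cD psi t)). set (d := snd (cD psi t)).
  unfold Cf.
  replace (1 + 2 * Rabs lam + (2 * cm W t + 2 * cm V t)) with (1 + 2 * cm W t + 2 * (cm V t + Rabs lam)) by ring.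
  apply bound_aux.
  - assert (0 <= (a - c) * (a - c) + (b - d) * (b - d)) by (apply Rplus_le_le_0_compat; apply Rle_0_sqr).
    assert (0 <= (a + c) * (a + c) + (b + d) * (b + d)) by (apply Rplus_le_le_0_compat; apply Rle_0_sqr).
    cut (Rabs (a * c + b * d) <= (a * a + b * b + c * c + d * d) / 2). lra. apply Rabs_le; split; nra.
  - assert (0 <= (a - d) * (a - d) + (b + c) * (b + c)) by (apply Rplus_le_le_0_compat; apply Rle_0_sqr).
    assert (0 <= (a + d) * (a + d) + (b - c) * (b - c)) by (apply Rplus_le_le_0_compat; apply Rle_0_sqr).
    cut (Rabs (a * d - b * c) <= (a * a + b * b + c * c + d * d) / 2). lra. apply Rabs_le; split; nra.
  - apply Rplus_le_le_0_compat; apply Rle_0_sqr.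
  - assert (0 <= a * a + b * b) by (apply Rplus_le_le_0_compat; apply Rle_0_sqr). lra.
  - eapply Rle_trans; [|apply (Rmax_Cmod (W t))]. apply Rmax_l.
  - assert (Hv : Rabs (fst (V t) - lam) <= Cmod (V t - RtoC lam)%C).
    { eapply Rle_trans; [|apply (Rmax_Cmod (V t - RtoC lam)%C)].
      replace (fst (V t) - lam) with (fst (V t - RtoC lam)%C) by (simpl; ring). apply Rmax_l. }
    eapply Rle_trans; [exact Hv|]. apply Cv_bound.
  - assert (Hv : Rabs (snd (V t)) <= Cmod (V t - RtoC lam)%C).
    { eapply Rle_trans; [|apply (Rmax_Cmod (V t - RtoC lam)%C)].
      replace (snd (V t)) with (snd (V t - RtoC lam)%C) by (simpl; ring). apply Rmax_r. }
    eapply Rle_trans; [exact Hv|]. apply Cv_bound.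
Qed.

Lemma zero_right (E : R -> R) x0 : (forall t, continuous E t) ->
  (forall z, E z = 0 -> exists del, 0 < del /\ forall t, Rabs (t - z) <= del -> E t = 0) ->
  E x0 = 0 -> forall y, x0 <= y -> E y = 0.
Proof.
  intros HC HL H0 y Hy.
  set (A := fun t => x0 <= t <= y /\ forall u, x0 <= u <= t -> E u = 0).
  assert (Hb : bound A) by (exists y; intros t [Ht _]; lra).
  assert (Hne : exists t, A t) by (exists x0; split; [lra|]; intros u Hu; replace u with x0 by lra; auto).
  destruct (completeness A Hb Hne) as [m [Hub Hlub]].
  assert (Hm0 : x0 <= m) by (apply Hub; destruct Hne; unfold A; split; [lra|]; intros u Hu; replace u with x0 by lra; auto).
  assert (Hmy : m <= y) by (apply Hlub; intros t [Ht _]; lra).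
  assert (Hbelow : forall u, x0 <= u < m -> E u = 0).
  { intros u Hu. apply NNPP. intros Hn.
    assert (Hub' : is_upper_bound A u).
    { intros t [Ht Ht2]. destruct (Rle_dec t u) as [|Htu]; auto. exfalso; apply Hn; apply Ht2; lra. }
    specialize (Hlub u Hub'). lra. }
  assert (Hm : E m = 0).
  { destruct (Req_dec m x0) as [->|Hmx]; auto.
    apply NNPP. intros Hn.
    assert (Hp : 0 < Rabs (E m)) by (apply Rabs_pos_lt; auto).
    specialize (HC m). apply filterlim_locally with (eps := mkposreal _ Hp) in HC.
    apply locally_R in HC. destruct HC as [eta Heta].
    set (u := Rmax x0 (m - eta / 2)).
    assert (Hu1 := Rmax_l x0 (m - eta / 2)). assert (Hu2 := Rmax_r x0 (m - eta / 2)).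
    assert (Hum : u < m) by (unfold u; apply Rmax_case; pose proof (cond_pos eta); lra).
    assert (Eu : E u = 0) by (apply Hbelow; fold u in Hu1; lra).
    assert (Hb' : ball (E m) (Rabs (E m)) (E u)).
    { apply Heta. apply ball_R. fold u in Hu1, Hu2. rewrite Rabs_left by lra. 
      assert (m - u <= eta / 2) by lra. pose proof (cond_pos eta). lra. }
    rewrite Eu in Hb'. apply ball_R' in Hb'. unfold Rabs in Hb'; destruct (Rcase_abs (E m)); lra. }
  destruct (Req_dec m y) as [<-|Hmy']; auto.
  exfalso. destruct (HL m Hm) as [del [Hdel Hdel2]].
  set (t := Rmin (m + del) y).
  assert (Ht1 := Rmin_l (m + del) y). assert (Ht2 := Rmin_r (m + del) y).
  assert (Htm : m < t) by (unfold t; apply Rmin_case; lra). fold t in Ht1, Ht2.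
  assert (At : A t).
  { split; [lra|]. intros u Hu. destruct (Rlt_dec u m).
    - apply Hbelow; lra.
    - apply Hdel2. rewrite Rabs_right; lra. }
  specialize (Hub t At). lra.
Qed.

Lemma zero_global (E : R -> R) x0 : (forall t, continuous E t) ->
  (forall z, E z = 0 -> exists del, 0 < del /\ forall t, Rabs (t - z) <= del -> E t = 0) ->
  E x0 = 0 -> forall y, E y = 0.
Proof.
  intros HC HL H0 y. destruct (Rle_dec x0 y).
  - apply (zero_right E x0); auto.
  - set (E' := fun t => E (- t)).
    assert (HC' : forall t, continuous E' t).
    { intros t. unfold E'. apply (continuous_comp (fun t => - t) E). apply (ex_derive_continuous (fun t : R => - t)). auto_derive; auto. apply HC. }
    assert (HL' : forall z, E' z = 0 -> exists del, 0 < del /\ forall t, Rabs (t - z) <= del -> E' t = 0).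
    { intros z Hz. destruct (HL (- z) Hz) as [del [Hd Hd2]]. exists del. split; auto.
      intros t Ht. apply Hd2. replace (- t - - z) with (- (t - z)) by ring. rewrite Rabs_Ropp; auto. }
    assert (E' (- x0) = 0) by (unfold E'; rewrite Ropp_involutive; auto).
    assert (E' (- y) = 0) by (apply (zero_right E' (- x0)); auto; lra).
    unfold E' in H1. rewrite Ropp_involutive in H1. auto.
Qed.

Lemma sol_unique W V lam psi x0 : PC0 W -> PC0 V -> sol W V lam psi ->
  psi x0 = 0%C -> cD psi x0 = 0%C -> forall x, psi x = 0%C.
Proof.
  intros HW HV Hs H0 H0' x.
  assert (Hs' := Hs). destruct Hs' as [S1 [S2 S3]].
  assert (HD := Ef_derive psi S1 S2).
  assert (HB := Ef_bound W V lam psi Hs).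
  assert (HE : forall y, Ef psi y = 0).
  { apply (zero_global _ x0).
    - intros t. apply (ex_derive_continuous (Ef psi)). eexists; apply HD.
    - intros z Hz.
      destruct (PC0_loc W HW z) as [d1 [Hd1 [WR [WL [CR1 [CL1 [SR1 SL1]]]]]]].
      destruct (PC0_loc V HV z) as [d2 [Hd2 [VR [VL [CR2 [CL2 [SR2 SL2]]]]]]].
      set (d := Rmin d1 d2).
      assert (Hm1 := Rmin_l d1 d2). assert (Hm2 := Rmin_r d1 d2).
      assert (Hd : 0 < d) by (apply Rmin_pos; lra). fold d in Hm1, Hm2.
      assert (CC : forall t, (z < t <= z + d \/ z - d <= t < z) -> continuous (Cf W V lam) t).
      { intros t Ht. unfold Cf. apply rcont_plus; [apply rcont_const|].
        apply rcont_plus; apply rcont_mult; try apply rcont_const.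
        - apply ccont_Cmod. destruct Ht; [apply WR|apply WL]; lra.
        - apply ccont_Cmod. destruct Ht; [apply VR|apply VL]; lra. }
      assert (CRc : contR (fun _ => 1 + 2 * Rabs lam) z d) by (intros t _; apply rcont_const).
      assert (CLc : contL (fun _ => 1 + 2 * Rabs lam) z d) by (intros t _; apply rcont_const).
      assert (CRw : contR (fun t => 2 * cm W t) z d) by (intros t Ht; apply rcont_mult; [apply rcont_const|apply CR1; lra]).
      assert (CRv : contR (fun t => 2 * cm V t) z d) by (intros t Ht; apply rcont_mult; [apply rcont_const|apply CR2; lra]).
      assert (CLw : contL (fun t => 2 * cm W t) z d) by (intros t Ht; apply rcont_mult; [apply rcont_const|apply CL1; lra]).
      assert (CLv : contL (fun t => 2 * cm V t) z d) by (intros t Ht; apply rcont_mult; [apply rcont_const|apply CL2; lra]).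
      assert (SRC : SR (Cf W V lam) z).
      { unfold Cf. apply (SR_plus _ _ z d); auto.
        - intros t Ht. apply rcont_plus; auto.
        - apply (cont_SR _ z d); auto. apply rcont_const.
        - apply (SR_plus _ _ z d); auto.
          + apply (SR_scal 2 _ z d); auto; try lra. eapply contR_mono; eauto.
          + apply (SR_scal 2 _ z d); auto; try lra. eapply contR_mono; eauto. }
      assert (SLC : SL (Cf W V lam) z).
      { unfold Cf. apply (SL_plus _ _ z d); auto.
        - intros t Ht. apply rcont_plus; auto.
        - apply (cont_SL _ z d); auto. apply rcont_const.
        - apply (SL_plus _ _ z d); auto.
          + apply (SL_scal 2 _ z d); auto; try lra. eapply contL_mono; eauto.
          + apply (SL_scal 2 _ z d); auto; try lra. eapply contL_mono; eauto. }
      assert (Cpos : forall t, 0 <= Cf W V lam t).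
      { intros t. unfold Cf, cm. pose proof (Rabs_pos lam). pose proof (Cmod_ge_0 (W t)). pose proof (Cmod_ge_0 (V t)). lra. }
      destruct (gronwall_R (Ef psi) (dEf psi) (Cf W V lam) z d Hd HD (Ef_pos psi) Hz) as [dR [HdR HR]].
      { intros t. specialize (HB t). apply Rabs_le_between in HB. lra. }
      { intros t Ht. apply CC. lra. }
      { auto. } { auto. }
      destruct (gronwall_L (Ef psi) (dEf psi) (Cf W V lam) z d Hd HD (Ef_pos psi) Hz) as [dL [HdL HL]].
      { intros t. specialize (HB t). apply Rabs_le_between in HB. lra. }
      { intros t Ht. apply CC. lra. }
      { auto. } { auto. }
      exists (Rmin dR dL). split. apply Rmin_pos; auto.
      intros t Ht. assert (H1 := Rmin_l dR dL). assert (H2 := Rmin_r dR dL).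
      destruct (Rle_dec z t).
      + apply HR. rewrite Rabs_right in Ht; lra.
      + apply HL. rewrite Rabs_left in Ht; lra.
    - unfold Ef. rewrite H0, H0'. simpl. ring. }
  specialize (HE x). unfold Ef in HE.
  assert (0 <= fst (psi x) * fst (psi x)) by apply Rle_0_sqr.
  assert (0 <= snd (psi x) * snd (psi x)) by apply Rle_0_sqr.
  assert (0 <= fst (cD psi x) * fst (cD psi x)) by apply Rle_0_sqr.
  assert (0 <= snd (cD psi x) * snd (cD psi x)) by apply Rle_0_sqr.
  assert (A : fst (psi x) * fst (psi x) = 0) by lra.
  assert (B : snd (psi x) * snd (psi x) = 0) by lra.
  apply Rmult_integral in A. apply Rmult_integral in B.
  apply injective_projections; simpl; destruct A; destruct B; auto.
Qed.

Lemma cD_lin (a b : C) f g x : cdiff f -> cdiff g ->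
  cD (fun t => (a * f t + b * g t)%C) x = (a * cD f x + b * cD g x)%C.
Proof.
  intros F G.
  assert (D1 := cderiv_plus _ _ _ _ (cderiv_scal a _ _ (cdiff_cderiv _ F)) (cderiv_scal b _ _ (cdiff_cderiv _ G))).
  rewrite (cderiv_cD _ _ D1). reflexivity.
Qed.

Definition wr (f g : R -> C) : C := (f 0 * cD g 0 - cD f 0 * g 0)%C.

Lemma span2 W V lam f g psi : PC0 W -> PC0 V -> sol W V lam f -> sol W V lam g -> sol W V lam psi ->
  wr f g <> 0%C -> exists a b, forall x, psi x = (a * f x + b * g x)%C.
Proof.
  intros HW HV Sf Sg Sp Hw.
  set (a := ((psi 0 * cD g 0 - cD psi 0 * g 0) / wr f g)%C).
  set (b := ((f 0 * cD psi 0 - cD f 0 * psi 0) / wr f g)%C).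
  exists a, b.
  set (chi := fun t => (1 * psi t + 1 * ((- a) * f t + (- b) * g t))%C).
  assert (Sc : sol W V lam chi) by (apply sol_lin; auto; apply sol_lin; auto).
  assert (Z : forall x, chi x = 0%C).
  { destruct Sf as [F1 _]. destruct Sg as [G1 _]. destruct Sp as [P1 _].
    apply (sol_unique W V lam chi 0); auto.
    - unfold chi, a, b, wr in *. field; auto.
    - unfold chi. rewrite cD_lin; auto. rewrite cD_lin; auto.
      unfold a, b, wr in *. field; auto.
      eapply cderiv_cdiff. apply cderiv_plus; apply cderiv_scal; apply cdiff_cderiv; auto. }
  intros x. specialize (Z x). unfold chi in Z.
  transitivity (1 * psi x + 1 * (- a * f x + - b * g x) + (a * f x + b * g x))%C. ring.
  rewrite Z. ring.
Qed.

Lemma dep2 W V lam f g : PC0 W -> PC0 V -> sol W V lam f -> sol W V lam g ->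
  wr f g = 0%C -> (exists x, f x <> 0%C) -> exists c, forall x, g x = (c * f x)%C.
Proof.
  intros HW HV Sf Sg Hw [x0 Hx0].
  assert (Hnz : f 0 <> 0%C \/ cD f 0 <> 0%C).
  { apply NNPP. intros Hn. apply Hx0. apply (sol_unique W V lam f 0); auto;
    apply NNPP; intros Hm; apply Hn; auto. }
  destruct Sf as [F1 F2]. destruct Sg as [G1 G2].
  destruct Hnz as [H0|H0].
  - exists (g 0 / f 0)%C.
    set (chi := fun t => (1 * g t + (- (g 0 / f 0)) * f t)%C).
    assert (Z : forall x, chi x = 0%C).
    { apply (sol_unique W V lam chi 0); auto.
      - apply sol_lin; split; auto.
      - unfold chi; cbv beta. field; auto.
      - unfold chi. rewrite cD_lin by auto. unfold wr in Hw.
        apply (Cmult_cancel (f 0)); auto.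
        transitivity (f 0 * cD g 0 - cD f 0 * g 0)%C. field; auto. rewrite Hw. ring. }
    intros x. specialize (Z x). unfold chi in Z.
    transitivity (1 * g x + - (g 0 / f 0) * f x + (g 0 / f 0) * f x)%C. ring. rewrite Z. ring.
  - exists (cD g 0 / cD f 0)%C.
    set (chi := fun t => (1 * g t + (- (cD g 0 / cD f 0)) * f t)%C).
    assert (Z : forall x, chi x = 0%C).
    { apply (sol_unique W V lam chi 0); auto.
      - apply sol_lin; split; auto.
      - unfold chi. unfold wr in Hw. apply (Cmult_cancel (cD f 0)); auto.
        transitivity (- (f 0 * cD g 0 - cD f 0 * g 0))%C. field; auto. rewrite Hw. ring.
      - unfold chi. rewrite cD_lin by auto. field; auto. }
    intros x. specialize (Z x). unfold chi in Z.
    transitivity (1 * g x + - (cD g 0 / cD f 0) * f x + (cD g 0 / cD f 0) * f x)%C. ring. rewrite Z. ring.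
Qed.

Lemma indep_floquet W V lam gamma f g (m1 m2 : C) : PC0 W -> PC0 V -> sol W V lam f -> sol W V lam g ->
  (exists x, f x <> 0%C) -> (exists x, g x <> 0%C) ->
  (forall x, f (x + gamma) = (m1 * f x)%C) -> (forall x, g (x + gamma) = (m2 * g x)%C) ->
  m1 <> m2 -> wr f g <> 0%C.
Proof.
  intros HW HV Sf Sg Hf [x0 Hg] Pf Pg Hm Hw.
  destruct (dep2 W V lam f g HW HV Sf Sg Hw Hf) as [c Hc].
  apply Hg. assert (Hm' : (m1 - m2)%C <> 0%C).
  { intros E. apply Hm. transitivity (m1 - m2 + m2)%C. ring. rewrite E. ring. }
  apply (Cmult_zero _ _ Hm').
  transitivity (m1 * g x0 - m2 * g x0)%C. ring.
  rewrite <- Pg, !Hc, Pf. ring.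
Qed.

Lemma Eset_lin W V lam (a b : C) f g : Eset W V lam f -> Eset W V lam g ->
  Eset W V lam (fun t => (a * f t + b * g t)%C).
Proof.
  intros [F1 F2] [G1 G2]. split.
  - apply Cp2_plus; apply Cp2_scal; auto.
  - apply Cp2_iff in F1. apply Cp2_iff in G1. destruct F1 as [A1 [A2 _]]. destruct G1 as [B1 [B2 _]].
    intros x. rewrite Lop_lin by auto. rewrite F2, G2. ring.
Qed.

Lemma Eset_zero W V lam : Eset W V lam (fun _ => 0%C).
Proof.
  split; [apply Cp2_zero|]. intros x. unfold Lop.
  rewrite (cderiv_cD _ _ (cderiv_const 0%C)). rewrite (cderiv_cD _ _ (cderiv_const 0%C)). ring.
Qed.

Lemma Dk_periodic W V gamma k q : periodic gamma W -> periodic gamma V -> periodic gamma q ->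
  periodic gamma (Dk W V k q).
Proof.
  intros HW HV Hq x. unfold Dk.
  rewrite (cD_periodic gamma (cD q)) by (apply cD_periodic; auto).
  rewrite (cD_periodic gamma q) by auto. rewrite HW, HV, Hq. reflexivity.
Qed.

Lemma formB_eqs W V lam gamma k q1 q2 : 0 < gamma -> periodic gamma W -> periodic gamma V ->
  Cpg 2 gamma q1 -> Cpg 2 gamma q2 ->
  (forall x, Lop W V (fun t => (ebl k t * (q1 t + RtoC t * q2 t))%C) x =
             (RtoC lam * (ebl k x * (q1 x + RtoC x * q2 x)))%C) ->
  (forall x, Dk W V k q2 x = (RtoC lam * q2 x)%C) /\
  (forall x, Dk W V k q1 x = (RtoC lam * q1 x + (2 * Ci * k - W x) * q2 x + 2 * cD q2 x)%C).
Proof.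
  intros Hg HW HV [C1 P1] [C2 P2] HL.
  assert (Cq : Cp 2 (fun t => (q1 t + RtoC t * q2 t)%C)) by (apply Cp2_plus; auto; apply Cp2_mul; auto; apply smooth_id).
  apply Cp2_iff in Cq; destruct Cq as [Q1 [Q2 _]].
  apply Cp2_iff in C1. apply Cp2_iff in C2. destruct C1 as [A1 [A2 _]]. destruct C2 as [B1 [B2 _]].
  assert (Hq : forall x, (Dk W V k q1 x + RtoC x * Dk W V k q2 x + (W x - 2 * Ci * k) * q2 x - 2 * cD q2 x)%C
                       = (RtoC lam * (q1 x + RtoC x * q2 x))%C).
  { intros x. rewrite <- Dk_lin2 by auto. apply (ebl_cancel k x). rewrite <- Lop_ebl by auto.
    rewrite HL. ring. }
  set (f := fun x => (Dk W V k q1 x + (W x - 2 * Ci * k) * q2 x - 2 * cD q2 x - RtoC lam * q1 x)%C).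
  set (g := fun x => (Dk W V k q2 x - RtoC lam * q2 x)%C).
  assert (Hfg : forall x, (f x + RtoC x * g x)%C = 0%C).
  { intros x. unfold f, g. specialize (Hq x).
    transitivity ((Dk W V k q1 x + RtoC x * Dk W V k q2 x + (W x - 2 * Ci * k) * q2 x - 2 * cD q2 x)
                  - RtoC lam * (q1 x + RtoC x * q2 x))%C. ring. rewrite Hq. ring. }
  assert (Pq1 : periodic gamma q1) by exact P1. assert (Pq2 : periodic gamma q2) by exact P2.
  assert (Pf : periodic gamma f).
  { intros x. unfold f. rewrite (Dk_periodic W V gamma k q1) by auto.
    rewrite (cD_periodic gamma q2) by auto. rewrite HW, Pq1, Pq2. reflexivity. }
  assert (Pg : periodic gamma g).
  { intros x. unfold g. rewrite (Dk_periodic W V gamma k q2) by auto. rewrite Pq2. reflexivity. }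
  assert (G0 := sep1 gamma f g ltac:(lra) Pf Pg Hfg).
  split.
  - intros x. specialize (G0 x). unfold g in G0.
    transitivity (Dk W V k q2 x - RtoC lam * q2 x + RtoC lam * q2 x)%C. ring. rewrite G0. ring.
  - intros x. specialize (Hfg x). rewrite G0 in Hfg. unfold f in Hfg.
    transitivity ((Dk W V k q1 x + (W x - 2 * Ci * k) * q2 x - 2 * cD q2 x - RtoC lam * q1 x + RtoC x * 0)
       + (RtoC lam * q1 x + (2 * Ci * k - W x) * q2 x + 2 * cD q2 x))%C. ring.
    rewrite Hfg. ring.
Qed.

Lemma formB_sol W V lam k q1 q2 : Cp 2 q1 -> Cp 2 q2 ->
  (forall x, Dk W V k q2 x = (RtoC lam * q2 x)%C) ->
  (forall x, Dk W V k q1 x = (RtoC lam * q1 x + (2 * Ci * k - W x) * q2 x + 2 * cD q2 x)%C) ->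
  Eset W V lam (fun x => (ebl k x * (q1 x + RtoC x * q2 x))%C).
Proof.
  intros C1 C2 E2 E1.
  assert (Cq : Cp 2 (fun t => (q1 t + RtoC t * q2 t)%C)) by (apply Cp2_plus; auto; apply Cp2_mul; auto; apply smooth_id).
  split. { apply Cp2_mul; auto. apply smooth_ebl. }
  apply Cp2_iff in Cq; destruct Cq as [Q1 [Q2 _]].
  apply Cp2_iff in C1. apply Cp2_iff in C2. destruct C1 as [A1 [A2 _]]. destruct C2 as [B1 [B2 _]].
  intros x. rewrite Lop_ebl by auto. rewrite Dk_lin2 by auto. rewrite E1, E2. ring.
Qed.

Lemma Lop_ebl_eq W V lam k p psi : Cp 2 p -> (forall x, psi x = (ebl k x * p x)%C) ->
  (forall x, Lop W V psi x = (RtoC lam * psi x)%C) -> forall x, Dk W V k p x = (RtoC lam * p x)%C.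
Proof.
  intros Cp Hpsi HL x. apply Cp2_iff in Cp. destruct Cp as [P1 [P2 _]].
  apply (ebl_cancel k x). rewrite <- Lop_ebl by auto.
  replace (fun t => (ebl k t * p t)%C) with psi by (apply functional_extensionality; auto).
  rewrite HL, Hpsi. ring.
Qed.

Lemma inA_floquet gamma W V lam k : 0 < gamma -> periodic gamma W -> periodic gamma V ->
  inA gamma W V lam k ->
  exists p, Cpg 2 gamma p /\ (forall x, Dk W V k p x = (RtoC lam * p x)%C) /\ exists x, p x <> 0%C.
Proof.
  intros Hg HW HV [psi [[HC HL] [[x0 Hx0] Hform]]].
  destruct Hform as [[p [Hp Hpsi]] | [[p1 [p2 [H1 [H2 [Hnz Hpsi]]]]] | [k' [p1 [p2 [Hk [H1 [H2 [Hn1 [Hn2 Hpsi]]]]]]]]]].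
  - exists p. split; auto. split.
    + apply (Lop_ebl_eq W V lam k p psi); auto. apply Hp.
    + exists x0. intros E. apply Hx0. rewrite Hpsi, E. ring.
  - exists p2. split; auto. split; auto.
    apply (formB_eqs W V lam gamma k p1 p2); auto.
    replace (fun t => (ebl k t * (p1 t + RtoC t * p2 t))%C) with psi by (apply functional_extensionality; auto).
    intros x. rewrite HL, Hpsi. ring.
  - exists p1. split; auto. split; auto.
    destruct H1 as [C1 P1]. destruct H2 as [C2 P2].
    assert (C1' := C1). assert (C2' := C2).
    apply Cp2_iff in C1'. apply Cp2_iff in C2'. destruct C1' as [A1 [A2 _]]. destruct C2' as [B1 [B2 _]].
    assert (Cpe1 : Cp 2 (fun t => (ebl k t * p1 t)%C)) by (apply Cp2_mul; auto; apply smooth_ebl).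
    assert (Cpe2 : Cp 2 (fun t => (ebl k' t * p2 t)%C)) by (apply Cp2_mul; auto; apply smooth_ebl).
    apply Cp2_iff in Cpe1. apply Cp2_iff in Cpe2. destruct Cpe1 as [E1 [E2 _]]. destruct Cpe2 as [F1 [F2 _]].
    assert (Hs : forall x, (ebl k x * (Dk W V k p1 x - RtoC lam * p1 x) + ebl k' x * (Dk W V k' p2 x - RtoC lam * p2 x))%C = 0%C).
    { intros x. 
      assert (Ep : psi = (fun t => (1 * (ebl k t * p1 t) + 1 * (ebl k' t * p2 t))%C)).
      { apply functional_extensionality; intros t. rewrite Hpsi. ring. }
      pose proof (HL x) as L. rewrite Ep in L. rewrite Lop_lin in L by auto.
      rewrite !Lop_ebl in L by auto.
      transitivity ((1 * (ebl k x * Dk W V k p1 x) + 1 * (ebl k' x * Dk W V k' p2 x)) -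
                    RtoC lam * (1 * (ebl k x * p1 x) + 1 * (ebl k' x * p2 x)))%C. ring.
      rewrite L. ring. }
    assert (Pf : periodic gamma (fun x => (Dk W V k p1 x - RtoC lam * p1 x)%C)).
    { intros x. rewrite (Dk_periodic W V gamma k p1) by auto. rewrite P1. reflexivity. }
    assert (Pg : periodic gamma (fun x => (Dk W V k' p2 x - RtoC lam * p2 x)%C)).
    { intros x. rewrite (Dk_periodic W V gamma k' p2) by auto. rewrite P2. reflexivity. }
    intros x. destruct (sep2 gamma k k' _ _ Hg Hk Pf Pg Hs x) as [Z _].
    transitivity (Dk W V k p1 x - RtoC lam * p1 x + RtoC lam * p1 x)%C. ring. rewrite Z. ring.
Qed.

Open Scope C_scope.

Lemma Eset_ext W V lam f g : (forall t, f t = g t) -> Eset W V lam f -> Eset W V lam g.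
Proof. intros E H. replace g with f; auto. apply functional_extensionality; auto. Qed.

Lemma nonzero_of (f : R -> C) : ~ (forall x, f x = 0%C) -> exists x, f x <> 0%C.
Proof. intros H. apply NNPP. intros H'. apply H. intros x. apply NNPP. intros Hx. apply H'. exists x; auto. Qed.

Lemma part3 gamma W V lam : 0 < gamma -> Cpg 0 gamma W -> Cpg 0 gamma V ->
  sigma3 gamma W V lam ->
     forall psi, Eset W V lam psi <->
       cspan (fun f => exists k p, inA gamma W V lam k /\ cardA2 gamma W V lam /\
               Cpg 2 gamma p /\ (forall x, Dk W V k p x = RtoC lam * p x) /\
               forall x, f x = ebl k x * p x) psi.
Proof.
  intros Hg [PW HWp] [PV HVp] [_ HA2] psi. split.
  - intros Hpsi. assert (HA2' := HA2). destruct HA2' as [k1 [k2 [HA1 [HA2' [Hk _]]]]].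
    destruct (inA_floquet gamma W V lam k1 Hg HWp HVp HA1) as [p1 [[C1 P1] [D1 [x1 N1]]]].
    destruct (inA_floquet gamma W V lam k2 Hg HWp HVp HA2') as [p2 [[C2 P2] [D2 [x2 N2]]]].
    set (f1 := fun x => (ebl k1 x * p1 x)%C). set (f2 := fun x => (ebl k2 x * p2 x)%C).
    assert (E1 : Eset W V lam f1) by (apply floquet_Eset; auto).
    assert (E2 : Eset W V lam f2) by (apply floquet_Eset; auto).
    assert (Hw : wr f1 f2 <> 0%C).
    { apply (indep_floquet W V lam gamma f1 f2 (mult_ gamma k1) (mult_ gamma k2)); auto;
        try apply Eset_sol; auto.
      - exists x1. unfold f1. apply Cmult_neq_0; auto. apply ebl_nz.
      - exists x2. unfold f2. apply Cmult_neq_0; auto. apply ebl_nz.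
      - intros x. unfold f1. apply floquet_mult; auto.
      - intros x. unfold f2. apply floquet_mult; auto.
      - intros E. apply Hk. apply mult_congr; auto. }
    destruct (span2 W V lam f1 f2 psi PW PV (Eset_sol _ _ _ _ E1) (Eset_sol _ _ _ _ E2) (Eset_sol _ _ _ _ Hpsi) Hw)
      as [a [b Hab]].
    exists ((a, f1) :: (b, f2) :: nil). split.
    + constructor; [|constructor; [|constructor]]; simpl.
      * exists k1, p1. split; [auto|split; [auto|split; [split; auto|split; auto]]].
      * exists k2, p2. split; [auto|split; [auto|split; [split; auto|split; auto]]].
    + intros x. simpl. rewrite Hab. ring.
  - intros [l [HF Hl]].
    apply (Eset_ext W V lam (lincomb l)); [intros; symmetry; auto|].
    clear Hl. induction l as [|[c f] l IH].
    + apply Eset_zero.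
    + inversion HF as [|x y Hf HF']. subst. simpl in Hf. destruct Hf as [k [p [_ [_ [[Cp Pp] [Dp Hfp]]]]]].
      assert (Ef : Eset W V lam f).
      { apply (Eset_ext W V lam (fun x => (ebl k x * p x)%C)); [intros; symmetry; auto|].
        apply floquet_Eset; auto. }
      apply (Eset_ext W V lam (fun t => (c * f t + 1 * lincomb l t)%C)).
      { intros t. simpl. ring. }
      apply Eset_lin; auto.
Qed.

Lemma ebl_inv k x : ebl (- k) x = / ebl k x.
Proof.
  apply (Cmult_cancel (ebl k x)). apply ebl_nz.
  rewrite Cmult_comm, ebl_opp. field. apply ebl_nz.
Qed.

Lemma mult_inv gamma k : mult_ gamma (- k) = / mult_ gamma k.
Proof. apply ebl_inv. Qed.

Lemma part1 gamma W V lam : 0 < gamma -> Cpg 0 gamma W -> Cpg 0 gamma V ->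
  sigma1 gamma W V lam -> forall k0, inA gamma W V lam k0 ->
     forall psi, Eset W V lam psi <->
       exists p, Cpg 2 gamma p /\ (forall x, Dk W V k0 p x = RtoC lam * p x) /\
                 forall x, psi x = ebl k0 x * p x.
Proof.
  intros Hg [PW HWp] [PV HVp] [[psi0 [k1 [HE0 [[x0 Hnz0] [p0 [[Cp0 Pp0] Hpsi0]]]]]] [[ks [HksA Hks]] HnoB]] k0 Hk0 psi.
  assert (Hgn : RtoC gamma <> 0) by (apply RtoC_nz; lra).
  split.
  - intros Hpsi.
    assert (HA1 : inA gamma W V lam k1).
    { exists psi0. split; auto. split; [exists x0; auto|]. left. exists p0. split; [split|]; auto. }
    assert (Hc : congr gamma k1 k0) by (apply (congr_trans _ _ ks); [apply congr_sym|]; auto).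
    set (m := mult_ gamma k1).
    assert (Hm : mult_ gamma k0 = m) by (symmetry; apply congr_mult; auto; lra).
    assert (Hm0 : m <> 0) by apply mult_nz.
    assert (Pphi : forall x, psi0 (x + gamma)%R = m * psi0 x).
    { intros x. rewrite !Hpsi0. apply floquet_mult; auto. }
    assert (Sphi := Eset_sol _ _ _ _ HE0). assert (Spsi := Eset_sol _ _ _ _ Hpsi).
    assert (Claim : forall x, psi (x + gamma)%R = m * psi x).
    { destruct (classic (wr psi0 psi = 0)) as [Hw|Hw].
      - destruct (dep2 W V lam psi0 psi PW PV Sphi Spsi Hw (ex_intro _ x0 Hnz0)) as [c Hc'].
        intros x. rewrite !Hc', Pphi. ring.
      - assert (ST := sol_shift W V lam gamma psi HWp HVp Spsi).
        destruct (span2 W V lam psi0 psi _ PW PV Sphi Spsi ST Hw) as [a [b Hab]].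
        simpl in Hab.
        destruct (classic (b = m)) as [Hb|Hb].
        + subst b. destruct (classic (a = 0)) as [Ha|Ha].
          * intros x. rewrite Hab, Ha. ring.
          * exfalso. apply HnoB. exists psi, k1. split; auto.
            set (c := a / (m * RtoC gamma)).
            assert (Hc0 : c <> 0).
            { intros E. apply Ha. transitivity (c * (m * RtoC gamma)).
              unfold c. field; auto. rewrite E. ring. }
            set (q2 := fun x => c * p0 x).
            set (q1 := fun x => ebl (- k1) x * psi x - RtoC x * q2 x).
            destruct Hpsi as [Cpsi Lpsi].
            exists q1, q2. split; [split|split; [split|split]].
            -- apply (Cp2_ext (fun t => ebl (- k1) t * psi t + (-1) * (RtoC t * q2 t))).
               { intros t. unfold q1. ring. }
               apply Cp2_plus. apply Cp2_mul; auto; apply smooth_ebl.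
               apply Cp2_scal. apply Cp2_mul. apply smooth_id. apply Cp2_scal; auto.
            -- intros x. unfold q1, q2. rewrite Hab, Pp0, ebl_period, mult_inv, Hpsi0. fold m.
               rewrite ebl_inv, RtoC_plus. unfold c. field. split; auto. split; auto. apply ebl_nz.
            -- apply Cp2_scal; auto.
            -- intros x. unfold q2. rewrite Pp0. reflexivity.
            -- exists x0. unfold q2. apply Cmult_neq_0; auto.
               intros E. apply Hnz0. rewrite Hpsi0, E. ring.
            -- intros x. unfold q1, q2. rewrite ebl_inv. field. apply ebl_nz.
        + exfalso.
          assert (Hbm : b - m <> 0).
          { intros E. apply Hb. replace b with (b - m + m) by ring. rewrite E. ring. }
          set (c := a / (b - m)).
          set (chi := fun t => c * psi0 t + 1 * psi t).
          assert (Echi : Eset W V lam chi) by (apply Eset_lin; auto).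
          assert (Tchi : forall x, chi (x + gamma)%R = b * chi x).
          { intros x. unfold chi. rewrite Hab, Pphi. unfold c. field. auto. }
          assert (Nchi : exists x, chi x <> 0).
          { apply nonzero_of. intros Z. apply Hw.
            assert (Ep : psi = fun t => (- c) * psi0 t + 0 * psi0 t).
            { apply functional_extensionality. intros t. specialize (Z t). unfold chi in Z.
              transitivity (c * psi0 t + 1 * psi t - c * psi0 t). ring. rewrite Z. ring. }
            unfold wr. rewrite Ep. destruct Sphi as [F1 _]. rewrite cD_lin by auto. ring. }
          assert (Hb0 : b <> 0).
          { intros E. destruct Nchi as [y Hy]. apply Hy.
            replace y with ((y - gamma) + gamma)%R by ring. rewrite Tchi, E. ring. }
          destruct (mult_log gamma b Hg Hb0) as [k' Hk'].
          destruct (floquet_form W V lam gamma k' chi Echi) as [p' [Cp' [_ Hp']]].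
          { intros x. rewrite Hk'. apply Tchi. }
          assert (HA' : inA gamma W V lam k').
          { exists chi. split; auto. split; auto. left. exists p'. split; auto. }
          assert (Hc' : congr gamma k1 k') by (apply (congr_trans _ _ ks); [apply congr_sym|]; auto).
          apply Hb. rewrite <- Hk'. symmetry. apply congr_mult; auto. lra. }
    apply (floquet_form W V lam gamma k0 psi Hpsi). intros x. rewrite Hm. apply Claim.
  - intros [p [[Cp Pp] [Dp Hp]]].
    apply (Eset_ext W V lam (fun x => ebl k0 x * p x)); [intros; symmetry; auto|].
    apply floquet_Eset; auto.
Qed.

Lemma congr_shift gamma k1 k0 : 0 < gamma -> congr gamma k1 k0 ->
  exists u, smooth u /\ periodic gamma u /\ forall x, ebl k1 x = ebl k0 x * u x.
Proof.
  intros Hg Hc. assert (Hm := congr_mult gamma k1 k0 ltac:(lra) Hc).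
  destruct Hc as [m Hk0]. set (s := RtoC (2 * IZR m * PI / gamma)) in *.
  exists (ebl (- s)). split; [apply smooth_ebl|split].
  - intros x. rewrite ebl_period. rewrite mult_inv.
    assert (Hs : mult_ gamma s = 1).
    { apply (Cmult_cancel (mult_ gamma k1)). apply mult_nz.
      rewrite Hm at 2. rewrite Hk0. unfold mult_. rewrite ebl_plusk. ring. }
    rewrite Hs. field.
  - intros x. rewrite Hk0, ebl_plusk.
    transitivity (ebl k1 x * (ebl (- s) x * ebl s x)). rewrite ebl_opp. ring. ring.
Qed.

Lemma part2 gamma W V lam : 0 < gamma -> Cpg 0 gamma W -> Cpg 0 gamma V ->
  sigma2 gamma W V lam -> forall k0, inA gamma W V lam k0 ->
     forall psi, Eset W V lam psi <->
       exists p1 p2, Cpg 2 gamma p1 /\ Cpg 2 gamma p2 /\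
         (forall x, Dk W V k0 p2 x = RtoC lam * p2 x) /\
         (forall x, Dk W V k0 p1 x = RtoC lam * p1 x
                       + (2 * Ci * k0 - W x) * p2 x + 2 * cD p2 x) /\
         forall x, psi x = ebl k0 x * (p1 x + RtoC x * p2 x).
Proof.
  intros Hg [PW HWp] [PV HVp] [[psi1 [k1 [HE1 [p1 [p2 [[C1 P1] [[C2 P2] [[x2 Hnz2] Hpsi1]]]]]]]] [ks [HksA Hks]]] k0 Hk0 psi.
  assert (Hgn : RtoC gamma <> 0) by (apply RtoC_nz; lra).
  split.
  - intros Hpsi.
    assert (Lp : forall x, Lop W V (fun t => ebl k1 t * (p1 t + RtoC t * p2 t)) x =
                           RtoC lam * (ebl k1 x * (p1 x + RtoC x * p2 x))).
    { replace (fun t => ebl k1 t * (p1 t + RtoC t * p2 t)) with psi1 by (apply functional_extensionality; auto).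
      intros x. destruct HE1 as [_ L]. rewrite L, Hpsi1. ring. }
    destruct (formB_eqs W V lam gamma k1 p1 p2 Hg HWp HVp (conj C1 P1) (conj C2 P2) Lp) as [D2 D1].
    assert (N1 : exists x, psi1 x <> 0).
    { apply nonzero_of. intros Z. apply Hnz2.
      apply (sep1 gamma p1 p2); auto. lra.
      intros x. apply (ebl_cancel k1 x). rewrite <- Hpsi1, Z. ring. }
    assert (HA1 : inA gamma W V lam k1).
    { exists psi1. split; auto. split; auto. right; left. exists p1, p2.
      split; [split|split; [split|split]]; auto. exists x2; auto. }
    assert (Hc : congr gamma k1 k0) by (apply (congr_trans _ _ ks); [apply congr_sym|]; auto).
    set (f1 := fun x => ebl k1 x * p2 x).
    assert (E1 : Eset W V lam f1) by (apply floquet_Eset; auto).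
    assert (Hw : wr f1 psi1 <> 0).
    { intros Hw. assert (Nf1 : exists x, f1 x <> 0).
      { exists x2. unfold f1. apply Cmult_neq_0; auto. apply ebl_nz. }
      destruct (dep2 W V lam f1 psi1 PW PV (Eset_sol _ _ _ _ E1) (Eset_sol _ _ _ _ HE1) Hw Nf1) as [c Hc'].
      apply Hnz2. apply (sep1 gamma (fun x => p1 x - c * p2 x) p2); auto. lra.
      - intros x. rewrite P1, P2. reflexivity.
      - intros x. apply (ebl_cancel k1 x).
        transitivity (psi1 x - c * f1 x). rewrite Hpsi1. unfold f1. ring.
        rewrite Hc'. ring. }
    destruct (span2 W V lam f1 psi1 psi PW PV (Eset_sol _ _ _ _ E1) (Eset_sol _ _ _ _ HE1) (Eset_sol _ _ _ _ Hpsi) Hw)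
      as [a [b Hab]].
    destruct (congr_shift gamma k1 k0 Hg Hc) as [u [Su [Pu Hu]]].
    set (q1 := fun x => u x * (b * p1 x + a * p2 x)).
    set (q2 := fun x => u x * (b * p2 x)).
    assert (Cq1 : Cpg 2 gamma q1).
    { split. apply Cp2_mul; auto. apply Cp2_plus; apply Cp2_scal; auto.
      intros x. unfold q1. rewrite Pu, P1, P2. reflexivity. }
    assert (Cq2 : Cpg 2 gamma q2).
    { split. apply Cp2_mul; auto. apply Cp2_scal; auto.
      intros x. unfold q2. rewrite Pu, P2. reflexivity. }
    assert (Hq : forall x, psi x = ebl k0 x * (q1 x + RtoC x * q2 x)).
    { intros x. rewrite Hab. unfold f1, q1, q2. rewrite Hpsi1, Hu. ring. }
    assert (Lq : forall x, Lop W V (fun t => ebl k0 t * (q1 t + RtoC t * q2 t)) x =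
                           RtoC lam * (ebl k0 x * (q1 x + RtoC x * q2 x))).
    { replace (fun t => ebl k0 t * (q1 t + RtoC t * q2 t)) with psi by (apply functional_extensionality; auto).
      intros x. destruct Hpsi as [_ L]. rewrite L, Hq. ring. }
    destruct (formB_eqs W V lam gamma k0 q1 q2 Hg HWp HVp Cq1 Cq2 Lq) as [E2 E3].
    exists q1, q2. split; [auto|split; [auto|split; [auto|split; auto]]].
  - intros [q1 [q2 [[Cq1 _] [[Cq2 _] [E2 [E1 Hq]]]]]].
    apply (Eset_ext W V lam (fun x => ebl k0 x * (q1 x + RtoC x * q2 x))); [intros; symmetry; auto|].
    apply formB_sol; auto.
Qed.

Theorem theorem3p5 (gamma : R) (W V : R -> C) (lam : R)
  (hgamma : 0 < gamma) (hW : Cpg 0 gamma W) (hV : Cpg 0 gamma V) :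
  (sigma1 gamma W V lam -> forall k0, inA gamma W V lam k0 ->
     forall psi, Eset W V lam psi <->
       exists p, Cpg 2 gamma p /\ (forall x, Dk W V k0 p x = RtoC lam * p x) /\
                 forall x, psi x = ebl k0 x * p x) /\
  (sigma2 gamma W V lam -> forall k0, inA gamma W V lam k0 ->
     forall psi, Eset W V lam psi <->
       exists p1 p2, Cpg 2 gamma p1 /\ Cpg 2 gamma p2 /\
         (forall x, Dk W V k0 p2 x = RtoC lam * p2 x) /\
         (forall x, Dk W V k0 p1 x = RtoC lam * p1 x
                       + (2 * Ci * k0 - W x) * p2 x + 2 * cD p2 x) /\
         forall x, psi x = ebl k0 x * (p1 x + RtoC x * p2 x)) /\
  (sigma3 gamma W V lam ->
     forall psi, Eset W V lam psi <->
       cspan (fun f => exists k p, inA gamma W V lam k /\ cardA2 gamma W V lam /\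
               Cpg 2 gamma p /\ (forall x, Dk W V k p x = RtoC lam * p x) /\
               forall x, f x = ebl k x * p x) psi).
Proof.
  split; [|split].
  - apply part1; auto.
  - apply part2; auto.
  - apply part3; auto.
Qed.
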